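(* Let $r_0>0$ and $T>0$, and let $$D_T=\{(u,r,s,\phi):\ u\ge 0,\ r\ge r_0,\ u+r\le T+r_0,\ -1\le s\le 1,\ \phi\in\mathbb{R}\}.$$ Let $R,P,Q$ be real-valued functions that are $C^1$ on $D_T$, $2\pi$-periodic in $\phi$, and satisfy at all points of $D_T$ with $|s|<1$ the system $$2R_u = R_r+\frac{\sqrt{1-s^2}}{r}P_s+\frac{1}{r\sqrt{1-s^2}}Q_\phi-\frac{sP}{r\sqrt{1-s^2}},\qquad P_r=\frac{\sqrt{1-s^2}}{r}R_s-\frac{P}{r},\qquad Q_r=\frac{1}{r\sqrt{1-s^2}}R_\phi-\frac{Q}{r}.$$ (The values $R|_{u=0}=f(r,s,\phi)$, $r_0\le r\le T+r_0$, and $P|_{r=r_0}=g(u,s,\phi)$, $Q|_{r=r_0}=h(u,s,\phi)$, $0\le u\le T$, are the free data of this characteristic problem.) Then, with $v=(R,P,Q)$, $$\|v\|_T^2\le 2\left(\int_{\Sigma_u}R^2\,d\Sigma_u+\int_{\Sigma_r}\left(P^2+Q^2\right)d\Sigma_r\right).$$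
   Context: Coordinates: $(r,\theta,\phi)$ are spherical spatial coordinates of Minkowski space, $s=\cos\theta$, and $u=t-r$; subscripts denote partial derivatives. The system is the first-order reduction of the wave equation for $g=r\psi$ via $R=g_r$, $P=g_s\sqrt{1-s^2}/r$, $Q=g_\phi/(r\sqrt{1-s^2})$, but the claim concerns arbitrary solutions $(R,P,Q)$ as specified. Surfaces and measures: $\Sigma_u=\{u=0,\ r_0\le r\le T+r_0\}$ (a null cone) with $d\Sigma_u=dr\,ds\,d\phi$; $\Sigma_r=\{r=r_0,\ 0\le u\le T\}$ (a timelike worldtube) with $d\Sigma_r=du\,ds\,d\phi$; in both, $s\in[-1,1]$ and $\phi\in[0,2\pi]$. The norm on $\Sigma_T=\{u+r=T+r_0\}$ is $$\|v\|_T^2=\int_{r_0}^{T+r_0}\!\!\int_{-1}^{1}\!\!\int_0^{2\pi}\big(R^2+P^2+Q^2\big)(T+r_0-r,r,s,\phi)\,d\phi\,ds\,dr .$$ *)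

(* Defs.v *)
From Stdlib Require Import Reals Lra.
From Coquelicot Require Import Coquelicot.
Open Scope R_scope.

(* Points are (u, r, s, phi); functions are curried: F u r s phi. *)

Definition DT (r0 T u r s phi : R) : Prop :=
  0 <= u /\ r0 <= r /\ u + r <= T + r0 /\ -1 <= s <= 1.

Definition Dom := R -> R -> R -> R -> Prop.
Definition F4 := R -> R -> R -> R -> R.

Definition cont_on (D : Dom) (F : F4) : Prop :=
  forall u r s p, D u r s p ->
  forall eps, 0 < eps -> exists delta, 0 < delta /\
    forall u' r' s' p', D u' r' s' p' ->
      Rabs (u' - u) < delta -> Rabs (r' - r) < delta ->
      Rabs (s' - s) < delta -> Rabs (p' - p) < delta ->
      Rabs (F u' r' s' p' - F u r s p) < eps.

(* g : R -> R restricted to the increments t with (point + t e_i) in D has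
   derivative d at t = 0 (one-sided at the boundary of D). *)
Definition deriv_within (ok : R -> Prop) (g : R -> R) (d : R) : Prop :=
  forall eps, 0 < eps -> exists delta, 0 < delta /\
    forall t, t <> 0 -> Rabs t < delta -> ok t ->
      Rabs ((g t - g 0) / t - d) < eps.

Definition C1_on (D : Dom) (F Fu Fr Fs Fp : F4) : Prop :=
  cont_on D F /\ cont_on D Fu /\ cont_on D Fr /\ cont_on D Fs /\ cont_on D Fp /\
  forall u r s p, D u r s p ->
    deriv_within (fun t => D (u + t) r s p) (fun t => F (u + t) r s p) (Fu u r s p) /\
    deriv_within (fun t => D u (r + t) s p) (fun t => F u (r + t) s p) (Fr u r s p) /\
    deriv_within (fun t => D u r (s + t) p) (fun t => F u r (s + t) p) (Fs u r s p) /\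
    deriv_within (fun t => D u r s (p + t)) (fun t => F u r s (p + t)) (Fp u r s p).

Definition periodic_phi (D : Dom) (F : F4) : Prop :=
  forall u r s p, D u r s p -> F u r s (p + 2 * PI) = F u r s p.

Definition int3 (a b : R) (G : R -> R -> R -> R) : R :=
  RInt (fun x => RInt (fun s => RInt (fun p => G x s p) 0 (2 * PI)) (-1) 1) a b.

(* ||v||_T^2 : integral over Sigma_T = {u + r = T + r0}. *)
Definition normT2 (r0 T : R) (R_ P Q : F4) : R :=
  int3 r0 (T + r0) (fun r s p =>
    R_ (T + r0 - r) r s p ^ 2 + P (T + r0 - r) r s p ^ 2 + Q (T + r0 - r) r s p ^ 2).

Definition int_Sigma_u (r0 T : R) (R_ : F4) : R :=
  int3 r0 (T + r0) (fun r s p => R_ 0 r s p ^ 2).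

Definition int_Sigma_r (r0 T : R) (P Q : F4) : R :=
  int3 0 T (fun u s p => P u r0 s p ^ 2 + Q u r0 s p ^ 2).

(* Main.v *)
Require Import Defs.
From Stdlib Require Import Reals Lra.
From Coquelicot Require Import Coquelicot.
From Stdlib Require Import IndefiniteDescription.
Open Scope R_scope.

Lemma rabs_add_lt a b e1 e2 : Rabs a < e1 -> Rabs b < e2 -> Rabs (a + b) < e1 + e2.
Proof. intros; pose proof (Rabs_triang a b); lra. Qed.
Lemma rabs_sub_lt a b e1 e2 : Rabs a < e1 -> Rabs b < e2 -> Rabs (a - b) < e1 + e2.
Proof. intros; pose proof (Rabs_triang a (-b)); rewrite Rabs_Ropp in *; unfold Rminus; lra. Qed.

Definition clamp (a b x : R) := Rmax a (Rmin b x).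

Lemma clamp_in a b x : a <= b -> a <= clamp a b x <= b.
Proof. intros; unfold clamp, Rmax, Rmin; repeat destruct Rle_dec; lra. Qed.
Lemma clamp_id a b x : a <= x <= b -> clamp a b x = x.
Proof. intros; unfold clamp, Rmax, Rmin; repeat destruct Rle_dec; lra. Qed.
Lemma clamp_lip a b x y : a <= b -> Rabs (clamp a b x - clamp a b y) <= Rabs (x - y).
Proof. intros; unfold clamp, Rmax, Rmin; repeat destruct Rle_dec; unfold Rabs; repeat destruct Rcase_abs; lra. Qed.

Definition rc (a b : R) (g : R -> R) : Prop :=
  forall x, a <= x <= b -> forall eps, 0 < eps -> exists del, 0 < del /\
    forall y, a <= y <= b -> Rabs (y - x) < del -> Rabs (g y - g x) < eps.

Lemma cont_ed (g : R -> R) x : continuity_pt g x -> forall eps, 0 < eps ->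
  exists del, 0 < del /\ forall y, Rabs (y - x) < del -> Rabs (g y - g x) < eps.
Proof.
  intros H eps He. destruct (H eps He) as [del [Hd Hy]]. exists del; split; auto.
  intros y Hy'. destruct (Req_dec y x) as [->|Hne].
  - rewrite Rminus_diag, Rabs_R0; auto.
  - apply (Hy y). split; [split; [exact I| auto] | exact Hy'].
Qed.

Lemma ed_cont (g : R -> R) x : (forall eps, 0 < eps -> exists del, 0 < del /\
  forall y, Rabs (y - x) < del -> Rabs (g y - g x) < eps) -> continuity_pt g x.
Proof. intros H eps He. destruct (H eps He) as [d [Hd Hy]]. exists d; split; auto.
  intros y [_ Hy']. apply Hy; exact Hy'. Qed.

Lemma rc_clamp a b g : a <= b -> rc a b g -> forall x, continuity_pt (fun y => g (clamp a b y)) x.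
Proof.
  intros Hab Hg x. apply ed_cont. intros eps He.
  destruct (Hg (clamp a b x) (clamp_in a b x Hab) eps He) as [d [Hd Hd']].
  exists d; split; auto. intros y Hy. apply Hd'. apply clamp_in; auto.
  eapply Rle_lt_trans; [apply clamp_lip; auto| exact Hy].
Qed.

Lemma rc_ex a b g : a <= b -> rc a b g -> ex_RInt g a b.
Proof.
  intros Hab Hg. apply ex_RInt_ext with (fun y => g (clamp a b y)).
  - intros x Hx. rewrite Rmin_left, Rmax_right in Hx by lra. rewrite clamp_id; auto; lra.
  - apply (ex_RInt_continuous (V:=R_CompleteNormedModule)). intros; apply continuity_pt_filterlim, rc_clamp; auto.
Qed.

Lemma cont_rc a b g : (forall x, a <= x <= b -> continuity_pt g x) -> rc a b g.
Proof. intros H x Hx eps He. destruct (cont_ed g x (H x Hx) eps He) as [d [Hd Hd']].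
  exists d; split; auto. Qed.

Lemma RInt_sub (f g : R -> R) a b : ex_RInt f a b -> ex_RInt g a b ->
  RInt (fun x => f x - g x) a b = RInt f a b - RInt g a b.
Proof. intros; exact (RInt_minus f g a b H H0). Qed.
Lemma RInt_add (f g : R -> R) a b : ex_RInt f a b -> ex_RInt g a b ->
  RInt (fun x => f x + g x) a b = RInt f a b + RInt g a b.
Proof. intros; exact (RInt_plus f g a b H H0). Qed.
Lemma RInt_mulc (f : R -> R) c a b : ex_RInt f a b ->
  RInt (fun x => c * f x) a b = c * RInt f a b.
Proof. intros; exact (RInt_scal f a b c H). Qed.
Lemma ex_RInt_sub (f g : R -> R) a b : ex_RInt f a b -> ex_RInt g a b ->
  ex_RInt (fun x => f x - g x) a b.
Proof. intros; exact (ex_RInt_minus f g a b H H0). Qed.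
Lemma ex_RInt_add (f g : R -> R) a b : ex_RInt f a b -> ex_RInt g a b ->
  ex_RInt (fun x => f x + g x) a b.
Proof. intros; exact (ex_RInt_plus f g a b H H0). Qed.
Lemma ex_RInt_mulc (f : R -> R) c a b : ex_RInt f a b ->
  ex_RInt (fun x => c * f x) a b.
Proof. intros; exact (ex_RInt_scal f a b c H). Qed.

Lemma RInt_pt (f : R -> R) a : RInt f a a = 0.
Proof. exact (RInt_point a f). Qed.

Lemma FTC (g d : R -> R) a b : a <= b -> rc a b g -> rc a b d ->
  (forall x, a < x < b -> is_derive g x (d x)) -> RInt d a b = g b - g a.
Proof.
  intros Hab Hg Hd Hder.
  destruct (Req_dec a b) as [<-|Hne]. { rewrite RInt_pt; lra. }
  set (dt := fun y => d (clamp a b y)).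
  assert (Hdt : forall x, continuity_pt dt x) by (apply rc_clamp; auto).
  assert (Hex : forall u v, ex_RInt dt u v) by
    (intros; apply (ex_RInt_continuous (V:=R_CompleteNormedModule)); intros; apply continuity_pt_filterlim; auto).
  set (I := fun x => RInt dt a x).
  assert (HI : forall x, is_derive I x (dt x)).
  { intros x. apply is_derive_RInt with a. apply filter_forall. intros; apply RInt_correct; auto.
    apply continuity_pt_filterlim; auto. }
  set (Phi := fun x => g x - I x).
  assert (Hrc : rc a b Phi).
  { intros x Hx eps He. destruct (Hg x Hx (eps/2)) as [d1 [Hd1 H1]]; [lra|].
    assert (HcI : continuity_pt I x).
    { apply continuity_pt_filterlim. apply (ex_derive_continuous (K:=R_AbsRing) (V:=R_NormedModule) I). eexists; apply HI. }
    destruct (cont_ed _ _ HcI (eps/2)) as [d2 [Hd2 H2]]; [lra|].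
    exists (Rmin d1 d2); split. apply Rmin_pos; auto.
    intros y Hy Hyx. unfold Phi.
    specialize (H1 y Hy (Rlt_le_trans _ _ _ Hyx (Rmin_l _ _))).
    specialize (H2 y (Rlt_le_trans _ _ _ Hyx (Rmin_r _ _))).
    replace (g y - I y - (g x - I x)) with ((g y - g x) - (I y - I x)) by ring.
    replace eps with (eps/2 + eps/2) by field. apply rabs_sub_lt; auto. }
  set (Pt := fun x => Phi (clamp a b x)).
  assert (HPc : forall x, continuity_pt Pt x) by (apply rc_clamp; auto).
  destruct (MVT_gen Pt a b (fun _ => 0)) as [c [_ Hc]].
  - intros x Hx. rewrite Rmin_left, Rmax_right in Hx by lra.
    apply is_derive_ext_loc with Phi.
    + assert (Hp : 0 < Rmin (x - a) (b - x)) by (apply Rmin_pos; lra).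
      exists (mkposreal _ Hp). intros y Hy. unfold Pt. rewrite clamp_id; auto.
      change (Rabs (y - x) < Rmin (x - a) (b - x)) in Hy.
      pose proof (Rmin_l (x-a) (b-x)); pose proof (Rmin_r (x-a) (b-x)).
      unfold Rabs in Hy; destruct Rcase_abs in Hy; lra.
    + unfold Phi. replace 0 with (d x - dt x).
      * apply (is_derive_minus g I x (d x) (dt x)); auto.
      * unfold dt; rewrite clamp_id; lra.
  - intros x _; apply HPc.
  - unfold Pt, Phi in Hc. rewrite !clamp_id in Hc by lra.
    assert (Ia : I a = 0) by (unfold I; apply RInt_pt).
    assert (Ib : RInt d a b = I b).
    { unfold I. apply RInt_ext. intros x Hx. rewrite Rmin_left, Rmax_right in Hx by lra.
      unfold dt; rewrite clamp_id; lra. }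
    rewrite Ib. lra.
Qed.

Lemma equicont {P : Type} (dist : P -> P -> R) (ok : P -> Prop) (F : P -> R -> R) (a b : R) (p0 : P) :
  ok p0 -> (forall d, 0 < d -> dist p0 p0 < d) ->
  (forall t, a <= t <= b -> forall eps, 0 < eps -> exists del, 0 < del /\
     forall p t', ok p -> a <= t' <= b -> dist p0 p < del -> Rabs (t' - t) < del ->
       Rabs (F p t' - F p0 t) < eps) ->
  forall eps, 0 < eps -> exists del, 0 < del /\
     forall p t, ok p -> a <= t <= b -> dist p0 p < del -> Rabs (F p t - F p0 t) < eps.
Proof.
  intros Hok Hd0 Hc eps He.
  assert (Hex : forall t, exists d : posreal, a <= t <= b -> forall p t', ok p -> a <= t' <= b ->
     dist p0 p < d -> Rabs (t' - t) < d -> Rabs (F p t' - F p0 t) < eps/2).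
  { intros t. destruct (Rle_dec a t) as [H1|H1]; [destruct (Rle_dec t b) as [H2|H2]|].
    - destruct (Hc t (conj H1 H2) (eps/2)) as [d [Hd Hd']]; [lra|].
      exists (mkposreal d Hd); intros _; exact Hd'.
    - exists (mkposreal 1 Rlt_0_1); intros; lra.
    - exists (mkposreal 1 Rlt_0_1); intros; lra. }
  set (delta := fun t => proj1_sig (constructive_indefinite_description _ (Hex t))).
  assert (Hdelta : forall t, a <= t <= b -> forall p t', ok p -> a <= t' <= b ->
     dist p0 p < delta t -> Rabs (t' - t) < delta t -> Rabs (F p t' - F p0 t) < eps/2).
  { intros t. exact (proj2_sig (constructive_indefinite_description _ (Hex t))). }
  destruct (compactness_value_1d a b delta) as [d Hd].
  exists d; split; [apply cond_pos|].
  intros p t Hp Ht Hdp.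
  destruct (Rlt_dec (Rabs (F p t - F p0 t)) eps) as [Hl|Hl]; [exact Hl|exfalso].
  apply (Hd t Ht). intros [t1 [Ht1 [Htt1 Hdt1]]].
  apply Hl.
  assert (A1 := Hdelta t1 Ht1 p t Hp Ht (Rlt_le_trans _ _ _ Hdp Hdt1) Htt1).
  assert (A2 := Hdelta t1 Ht1 p0 t Hok Ht (Hd0 _ (cond_pos _)) Htt1).
  replace (F p t - F p0 t) with ((F p t - F p0 t1) - (F p0 t - F p0 t1)) by ring.
  replace eps with (eps/2 + eps/2) by field. apply rabs_sub_lt; auto.
Qed.

Lemma rint_bound (f : R -> R) a b M : ex_RInt f a b ->
  (forall t, Rmin a b <= t <= Rmax a b -> Rabs (f t) <= M) ->
  Rabs (RInt f a b) <= Rabs (b - a) * M.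
Proof.
  intros Hex Hb. destruct (Rle_dec a b).
  - rewrite (Rabs_right (b - a)) by lra. apply abs_RInt_le_const; auto.
    intros; apply Hb; rewrite Rmin_left, Rmax_right; lra.
  - rewrite <- (opp_RInt_swap f b a) by (apply ex_RInt_swap; auto).
    change (Rabs (- RInt f b a) <= Rabs (b - a) * M).
    rewrite Rabs_Ropp, (Rabs_left (b - a)) by lra. replace (-(b-a)) with (a - b) by ring.
    apply abs_RInt_le_const; [lra| apply ex_RInt_swap; auto |].
    intros; apply Hb; rewrite Rmin_right, Rmax_left; lra.
Qed.

Lemma small_mul A e : 0 <= A -> 0 < e -> A * (e / (A + 1)) < e.
Proof. intros. assert (e / (A + 1) * (A + 1) = e) by (field; lra).
  assert (0 < e / (A+1)) by (apply Rdiv_lt_0_compat; lra). nra. Qed.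

Lemma pcont {P : Type} (dist : P -> P -> R) (ok : P -> Prop) (F : P -> R -> R) (a b : R) (p0 : P) :
  (forall eps, 0 < eps -> exists del, 0 < del /\ forall p t, ok p ->
     Rmin a b <= t <= Rmax a b -> dist p0 p < del -> Rabs (F p t - F p0 t) < eps) ->
  (forall p, ok p -> ex_RInt (F p) a b) -> ok p0 ->
  forall eps, 0 < eps -> exists del, 0 < del /\ forall p, ok p -> dist p0 p < del ->
     Rabs (RInt (F p) a b - RInt (F p0) a b) < eps.
Proof.
  intros Heq Hex Hok eps He.
  pose proof (Rabs_pos (b - a)).
  destruct (Heq (eps / (Rabs (b-a) + 1))) as [d [Hd Hd']].
  { apply Rdiv_lt_0_compat; lra. }
  exists d; split; auto. intros p Hp Hdp.
  rewrite <- RInt_sub by auto.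
  eapply Rle_lt_trans. apply rint_bound with (M := eps / (Rabs (b-a) + 1)).
  - apply ex_RInt_sub; auto.
  - intros t Ht; left; apply Hd'; auto.
  - apply small_mul; auto.
Qed.

Lemma leibniz (F Fx : R -> R -> R) a b x0 eta :
  a <= b -> 0 < eta ->
  (forall x t, Rabs (x - x0) < eta -> a <= t <= b -> is_derive (fun z => F z t) x (Fx x t)) ->
  (forall x, Rabs (x - x0) < eta -> ex_RInt (F x) a b) ->
  ex_RInt (Fx x0) a b ->
  (forall eps, 0 < eps -> exists del, 0 < del /\ forall x t, Rabs (x - x0) < eta ->
     Rabs (x - x0) < del -> a <= t <= b -> Rabs (Fx x t - Fx x0 t) < eps) ->
  is_derive (fun x => RInt (F x) a b) x0 (RInt (Fx x0) a b).
Proof.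
  intros Hab Heta Hd Hex Hexd Heq.
  apply is_derive_Reals. intros eps He.
  set (e' := eps / (b - a + 1)).
  assert (He' : 0 < e') by (unfold e'; apply Rdiv_lt_0_compat; lra).
  destruct (Heq e' He') as [d [Hdpos Hd']].
  exists (mkposreal (Rmin d eta) (Rmin_pos _ _ Hdpos Heta)). simpl. intros h Hh0 Hh.
  assert (Hh1 : Rabs h < d) by (eapply Rlt_le_trans; [exact Hh| apply Rmin_l]).
  assert (Hh2 : Rabs h < eta) by (eapply Rlt_le_trans; [exact Hh| apply Rmin_r]).
  assert (Hx1 : Rabs (x0 + h - x0) < eta) by (replace (x0+h-x0) with h by ring; auto).
  assert (Hx0 : Rabs (x0 - x0) < eta) by (rewrite Rminus_diag, Rabs_R0; auto).
  assert (Eq : (RInt (F (x0+h)) a b - RInt (F x0) a b) / h - RInt (Fx x0) a b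
     = RInt (fun t => /h * (F (x0+h) t - F x0 t) - Fx x0 t) a b).
  { rewrite (RInt_sub (fun t => /h * (F (x0+h) t - F x0 t)) (Fx x0));
      [| apply ex_RInt_mulc, ex_RInt_sub; auto | auto].
    rewrite (RInt_mulc (fun t => F (x0+h) t - F x0 t)) by (apply ex_RInt_sub; auto).
    rewrite RInt_sub by auto. field; auto. }
  rewrite Eq.
  eapply Rle_lt_trans. apply abs_RInt_le_const with (M := e'); auto.
  - apply (ex_RInt_sub (fun t => /h * (F (x0+h) t - F x0 t)) (Fx x0)); auto.
    apply (ex_RInt_mulc (fun t => F (x0+h) t - F x0 t)), ex_RInt_sub; auto.
  - intros t Ht.
    destruct (MVT_gen (fun z => F z t) x0 (x0 + h) (fun z => Fx z t)) as [c [Hc Hc']].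
    + intros x Hx. apply Hd; auto.
      revert Hx; unfold Rmin, Rmax; destruct Rle_dec; intros; unfold Rabs in *;
        repeat destruct Rcase_abs; lra.
    + intros x Hx. apply continuity_pt_filterlim.
      apply (ex_derive_continuous (K:=R_AbsRing) (V:=R_NormedModule) (fun z => F z t)).
      eexists; apply Hd; auto.
      revert Hx; unfold Rmin, Rmax; destruct Rle_dec; intros; unfold Rabs in *;
        repeat destruct Rcase_abs; lra.
    + simpl in Hc'. rewrite Hc'.
      replace (/ h * (Fx c t * (x0 + h - x0)) - Fx x0 t) with (Fx c t - Fx x0 t) by (field; auto).
      left. apply Hd'; auto;
      revert Hc; unfold Rmin, Rmax; destruct Rle_dec; intros; unfold Rabs in *;
        repeat destruct Rcase_abs; lra.
  - unfold e'. apply small_mul; lra.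
Qed.

Definition cont2 (H : R -> R -> R) : Prop :=
  forall x y eps, 0 < eps -> exists del, 0 < del /\ forall x' y',
    Rabs (x' - x) < del -> Rabs (y' - y) < del -> Rabs (H x' y' - H x y) < eps.

Lemma cont2_pt2 H x : cont2 H -> forall y, continuity_pt (H x) y.
Proof. intros Hc y. apply ed_cont. intros eps He. destruct (Hc x y eps He) as [d [Hd Hd']].
  exists d; split; auto. intros; apply Hd'; auto. rewrite Rminus_diag, Rabs_R0; auto. Qed.

Lemma cont2_ex H x u v : cont2 H -> ex_RInt (H x) u v.
Proof. intros Hc. apply (ex_RInt_continuous (V:=R_CompleteNormedModule)).
  intros; apply continuity_pt_filterlim, cont2_pt2; auto. Qed.

Lemma cont2_equi H x0 a b : cont2 H -> forall eps, 0 < eps -> exists del, 0 < del /\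
  forall x t, Rabs (x - x0) < del -> a <= t <= b -> Rabs (H x t - H x0 t) < eps.
Proof.
  intros Hc eps He.
  destruct (equicont (fun p q => Rabs (q - p)) (fun _ => True) H a b x0 I) with (eps := eps)
    as [d [Hd Hd']]; auto.
  - intros; rewrite Rminus_diag, Rabs_R0; auto.
  - intros t Ht e He'. destruct (Hc x0 t e He') as [d [Hd Hd']]. exists d; split; auto.
  - exists d; split; auto.
Qed.

Lemma cont2_comp (G f g : R -> R -> R) : cont2 G ->
  (forall x y x' y', Rabs (f x' y' - f x y) <= Rabs (x' - x) + Rabs (y' - y)) ->
  (forall x y x' y', Rabs (g x' y' - g x y) <= Rabs (x' - x) + Rabs (y' - y)) ->
  cont2 (fun x y => G (f x y) (g x y)).
Proof.
  intros Hc Hf Hg x y eps He. destruct (Hc (f x y) (g x y) eps He) as [d [Hd Hd']].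
  exists (d/2); split; [lra|]. intros x' y' H1 H2. apply Hd'.
  - specialize (Hf x y x' y'); lra.
  - specialize (Hg x y x' y'); lra.
Qed.

Lemma lip_fst x y x' y' : Rabs (x' - x) <= Rabs (x' - x) + Rabs (y' - y).
Proof. pose proof (Rabs_pos (y' - y)); lra. Qed.
Lemma lip_snd x y x' y' : Rabs (y' - y) <= Rabs (x' - x) + Rabs (y' - y).
Proof. pose proof (Rabs_pos (x' - x)); lra. Qed.
Lemma lip_diff x y x' y' : Rabs ((x' - y') - (x - y)) <= Rabs (x' - x) + Rabs (y' - y).
Proof. replace ((x' - y') - (x - y)) with ((x' - x) + - (y' - y)) by ring.
  eapply Rle_trans; [apply Rabs_triang|]. rewrite Rabs_Ropp; lra. Qed.

Lemma RInt_cst (c a b : R) : RInt (fun _ => c) a b = (b - a) * c.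
Proof. exact (RInt_const a b c). Qed.

Lemma RInt_chasles (f : R -> R) a b c : ex_RInt f a b -> ex_RInt f b c ->
  RInt f a b + RInt f b c = RInt f a c.
Proof. intros; exact (RInt_Chasles f a b c H H0). Qed.

Lemma varint_cont H a : cont2 H -> cont2 (fun x y => RInt (H x) a y).
Proof.
  intros Hc x0 y0 eps He.
  destruct (Hc x0 y0 1 Rlt_0_1) as [d1 [Hd1 Hd1']].
  set (M := Rabs (H x0 y0) + 1).
  assert (HM : 0 < M) by (unfold M; pose proof (Rabs_pos (H x0 y0)); lra).
  pose proof (Rabs_pos (y0 - a)).
  destruct (cont2_equi H x0 (Rmin a y0) (Rmax a y0) Hc (eps/2/(Rabs (y0 - a) + 1))) as [d2 [Hd2 Hd2']].
  { apply Rdiv_lt_0_compat; lra. }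
  assert (Hd3 : 0 < eps / 2 / (M + 1)) by (apply Rdiv_lt_0_compat; lra).
  exists (Rmin d1 (Rmin d2 (eps/2/(M+1)))). split.
  { apply Rmin_pos; auto. apply Rmin_pos; auto. }
  intros x y Hx Hy.
  assert (Hxd1 : Rabs (x - x0) < d1) by (eapply Rlt_le_trans; [exact Hx| apply Rmin_l]).
  assert (Hxd2 : Rabs (x - x0) < d2) by
    (eapply Rlt_le_trans; [exact Hx| eapply Rle_trans; [apply Rmin_r| apply Rmin_l]]).
  assert (Hyd1 : Rabs (y - y0) < d1) by (eapply Rlt_le_trans; [exact Hy| apply Rmin_l]).
  assert (Hyd3 : Rabs (y - y0) < eps/2/(M+1)) by
    (eapply Rlt_le_trans; [exact Hy| eapply Rle_trans; [apply Rmin_r| apply Rmin_r]]).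
  rewrite <- (RInt_chasles (H x) a y0 y) by (apply cont2_ex; auto).
  replace (RInt (H x) a y0 + RInt (H x) y0 y - RInt (H x0) a y0) with
    ((RInt (H x) a y0 - RInt (H x0) a y0) + RInt (H x) y0 y) by ring.
  replace eps with (eps/2 + eps/2) by field.
  apply rabs_add_lt.
  - rewrite <- RInt_sub by (apply cont2_ex; auto).
    eapply Rle_lt_trans. apply rint_bound with (M := eps / 2 / (Rabs (y0 - a) + 1)).
    + apply ex_RInt_sub; apply cont2_ex; auto.
    + intros t Ht. left. apply Hd2'; auto.
    + apply small_mul; lra.
  - eapply Rle_lt_trans. apply rint_bound with (M := M).
    + apply cont2_ex; auto.
    + intros t Ht.
      assert (Htd : Rabs (t - y0) < d1).
      { revert Ht Hyd1; unfold Rmin, Rmax; destruct Rle_dec; intros; unfold Rabs in *;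
        repeat destruct Rcase_abs; lra. }
      specialize (Hd1' x t Hxd1 Htd).
      unfold M. pose proof (Rabs_triang (H x t - H x0 y0) (H x0 y0)).
      replace (H x t - H x0 y0 + H x0 y0) with (H x t) in H1 by ring. lra.
    + pose proof (Rabs_pos (y - y0)).
      apply Rle_lt_trans with (eps/2/(M+1) * M).
      * apply Rmult_le_compat_r; lra.
      * rewrite Rmult_comm. apply small_mul; lra.
Qed.

Lemma S_part (F : R -> R -> R) k c0 : cont2 F ->
  is_derive (fun c => RInt (F c) (c0 + k) (c + k)) c0 (F c0 (c0 + k)).
Proof.
  intros Hc. apply is_derive_Reals. intros eps He.
  destruct (Hc c0 (c0 + k) (eps/2)) as [d [Hd Hd']]; [lra|].
  exists (mkposreal d Hd). simpl. intros h Hh0 Hh.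
  rewrite RInt_pt.
  replace ((RInt (F (c0 + h)) (c0 + k) (c0 + h + k) - 0) / h - F c0 (c0 + k)) with
    (/h * RInt (fun t => F (c0 + h) t - F c0 (c0 + k)) (c0 + k) (c0 + h + k)).
  2:{ rewrite RInt_sub, RInt_cst. field; auto. apply cont2_ex; auto.
      apply (ex_RInt_continuous (V:=R_CompleteNormedModule)).
      intros; apply continuity_pt_filterlim, continuity_pt_const. intros u v; auto. }
  rewrite Rabs_mult, Rabs_Rinv by auto.
  assert (0 < Rabs h) by (apply Rabs_pos_lt; auto).
  apply Rle_lt_trans with (/ Rabs h * (Rabs h * (eps/2))).
  - apply Rmult_le_compat_l. left; apply Rinv_0_lt_compat; auto.
    eapply Rle_trans; [apply rint_bound with (M := eps/2)|
      right; replace (c0 + h + k - (c0 + k)) with h by ring; reflexivity].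
    + apply ex_RInt_sub. apply cont2_ex; auto.
      apply (ex_RInt_continuous (V:=R_CompleteNormedModule)).
      intros; apply continuity_pt_filterlim, continuity_pt_const. intros u v; auto.
    + intros t Ht. left. apply Hd'.
      * replace (c0 + h - c0) with h by ring; auto.
      * revert Ht Hh; unfold Rmin, Rmax; destruct Rle_dec; intros; unfold Rabs in *;
        repeat destruct Rcase_abs; lra.
  - replace (/ Rabs h * (Rabs h * (eps / 2))) with (eps/2) by (field; lra). lra.
Qed.

Lemma vleib (F Fx : R -> R -> R) a k c0 :
  a <= c0 + k -> cont2 F -> (forall c t, is_derive (fun z => F z t) c (Fx c t)) -> cont2 Fx ->
  is_derive (fun c => RInt (F c) a (c + k)) c0 (RInt (Fx c0) a (c0 + k) + F c0 (c0 + k)).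
Proof.
  intros Ha Hc Hd Hcx.
  apply is_derive_ext with (fun c => RInt (F c) a (c0 + k) + RInt (F c) (c0 + k) (c + k)).
  { intros c. apply RInt_chasles; apply cont2_ex; auto. }
  apply (is_derive_plus (K:=R_AbsRing) (V:=R_NormedModule)).
  - apply leibniz with (eta := 1); auto; try lra.
    + intros; apply cont2_ex; auto.
    + apply cont2_ex; auto.
    + intros eps He. destruct (cont2_equi Fx c0 a (c0+k) Hcx eps He) as [d [Hd1 Hd2]].
      exists d; split; auto.
  - apply S_part; auto.
Qed.
Lemma is_derive_varint (H : R -> R -> R) x a c : cont2 H ->
  is_derive (fun y => RInt (H x) a y) c (H x c).
Proof.
  intros Hc. apply (is_derive_RInt (V:=R_CompleteNormedModule) (H x) (fun y => RInt (H x) a y) a c).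
  - apply filter_forall. intros; apply (RInt_correct (V:=R_CompleteNormedModule)), cont2_ex; auto.
  - apply continuity_pt_filterlim, cont2_pt2; auto.
Qed.

Lemma is_derive_eq (f : R -> R) x l l' : is_derive f x l -> l = l' -> is_derive f x l'.
Proof. intros H ->; exact H. Qed.

Lemma fubini_tri (H : R -> R -> R) r0 rho : cont2 H -> r0 <= rho ->
  RInt (fun r => RInt (fun u => H u r) 0 (rho - r)) r0 rho =
  RInt (fun u => RInt (fun r => H u r) r0 (rho - u)) 0 (rho - r0).
Proof.
  intros Hc Hr.
  set (H' := fun x u => H u x).
  assert (Hc' : cont2 H').
  { intros x y eps He. destruct (Hc y x eps He) as [d [Hd Hd']]. exists d; split; auto.
    intros; unfold H'; apply Hd'; auto. }
  set (FL := fun c r => RInt (H' r) 0 (c - r)).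
  set (FR := fun c u => RInt (H u) r0 (c - u)).
  assert (HcL : cont2 FL).
  { apply (cont2_comp (fun x y => RInt (H' x) 0 y) (fun c r => r) (fun c r => c - r)).
    apply varint_cont; auto. intros; apply lip_snd. intros; apply lip_diff. }
  assert (HcR : cont2 FR).
  { apply (cont2_comp (fun x y => RInt (H x) r0 y) (fun c u => u) (fun c u => c - u)).
    apply varint_cont; auto. intros; apply lip_snd. intros; apply lip_diff. }
  assert (HcLx : cont2 (fun c r => H (c - r) r)).
  { apply (cont2_comp H (fun c r => c - r) (fun c r => r)); auto.
    intros; apply lip_diff. intros; apply lip_snd. }
  assert (HcRx : cont2 (fun c u => H u (c - u))).
  { apply (cont2_comp H (fun c u => u) (fun c u => c - u)); auto.
    intros; apply lip_snd. intros; apply lip_diff. }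
  assert (DL : forall c t, is_derive (fun z => FL z t) c (H (c - t) t)).
  { intros c t. unfold FL.
    pose proof (is_derive_comp (fun y => RInt (H' t) 0 y) (fun z => z - t) c (H' t (c - t)) 1) as Hh.
    replace (H (c - t) t) with (scal 1 (H' t (c - t))) by (apply (scal_one (V:=R_NormedModule))).
    apply Hh. apply is_derive_varint; auto.
    replace 1 with (1 - 0) by ring. apply (is_derive_minus (K:=R_AbsRing) (V:=R_NormedModule)).
    apply (is_derive_id (K:=R_AbsRing)). apply (is_derive_const (K:=R_AbsRing) (V:=R_NormedModule)). }
  assert (DR : forall c t, is_derive (fun z => FR z t) c (H t (c - t))).
  { intros c t. unfold FR.
    pose proof (is_derive_comp (fun y => RInt (H t) r0 y) (fun z => z - t) c (H t (c - t)) 1) as Hh.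
    replace (H t (c - t)) with (scal 1 (H t (c - t))) by (apply (scal_one (V:=R_NormedModule))).
    apply Hh. apply is_derive_varint; auto.
    replace 1 with (1 - 0) by ring. apply (is_derive_minus (K:=R_AbsRing) (V:=R_NormedModule)).
    apply (is_derive_id (K:=R_AbsRing)). apply (is_derive_const (K:=R_AbsRing) (V:=R_NormedModule)). }
  set (Psi := fun c => RInt (FL c) r0 (c + 0) - RInt (FR c) 0 (c + - r0)).
  assert (DPsi : forall c, r0 <= c -> is_derive Psi c 0).
  { intros c Hc0. unfold Psi.
    assert (D1 := vleib FL (fun c r => H (c - r) r) r0 0 c ltac:(lra) HcL DL HcLx).
    assert (D2 := vleib FR (fun c u => H u (c - u)) 0 (- r0) c ltac:(lra) HcR DR HcRx).
    apply (is_derive_eq _ _ _ _ (is_derive_minus (K:=R_AbsRing) (V:=R_NormedModule) _ _ c _ _ D1 D2)).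
    change (minus (RInt (fun r => H (c - r) r) r0 (c + 0) + FL c (c + 0))
              (RInt (fun u => H u (c - u)) 0 (c + - r0) + FR c (c + - r0)) = 0).
    unfold minus, plus, opp; simpl.
    unfold FL, FR. replace (c + 0 - (c + 0)) with 0 by ring.
      replace (c - (c + - r0)) with r0 by ring. rewrite !RInt_pt, Rplus_0_r.
      assert (Hs : RInt (fun r => H (c - r) r) r0 c = RInt (fun u => H u (c - u)) 0 (c + - r0)).
      { assert (Hex1 : forall u v, ex_RInt (fun u => H u (c - u)) u v)
          by (intros; exact (cont2_ex _ c _ _ HcRx)).
        pose proof (RInt_comp_lin (V:=R_CompleteNormedModule) (fun u => H u (c - u)) (-1) c r0 c (Hex1 _ _)) as Hl.
        rewrite (RInt_ext (fun y : R => scal (-1) ((fun u => H u (c - u)) (-1 * y + c)))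
                  (fun y => -1 * H (c - y) y)) in Hl.
        2:{ intros x _. change (scal (-1) (H (-1 * x + c) (c - (-1 * x + c))) = -1 * H (c - x) x).
            replace (-1 * x + c) with (c - x) by ring. replace (c - (c - x)) with x by ring. reflexivity. }
        rewrite RInt_mulc in Hl by (exact (cont2_ex (fun c0 r => H (c0 - r) r) c r0 c HcLx)).
        replace (-1 * r0 + c) with (c + - r0) in Hl by ring. replace (-1 * c + c) with 0 in Hl by ring.
        rewrite <- (opp_RInt_swap (V:=R_CompleteNormedModule) (fun u => H u (c - u)) 0 (c + - r0) (Hex1 _ _)) in Hl.
        change (-1 * RInt (fun y => H (c - y) y) r0 c = - RInt (fun u => H u (c - u)) 0 (c + - r0)) in Hl.
        lra. }
      rewrite Hs. rewrite Rminus_diag, (RInt_pt (H' c)). lra. }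
  destruct (MVT_gen Psi r0 rho (fun _ => 0)) as [c [_ Hc2]].
  - intros x Hx. rewrite Rmin_left, Rmax_right in Hx by lra. apply DPsi; lra.
  - intros x Hx. rewrite Rmin_left, Rmax_right in Hx by lra. apply continuity_pt_filterlim.
    apply (ex_derive_continuous (K:=R_AbsRing) (V:=R_NormedModule) Psi). eexists; apply DPsi; lra.
  - unfold Psi in Hc2. rewrite Rplus_0_r, Rplus_0_r in Hc2.
    replace (r0 + - r0) with 0 in Hc2 by ring. rewrite !RInt_pt in Hc2.
    unfold FL, FR, H' in Hc2. change (RInt (fun r => RInt (fun u => H u r) 0 (rho - r)) r0 rho - RInt (fun u => RInt (fun r => H u r) r0 (rho - u)) 0 (rho - r0) - (0 - 0) = 0 * (rho - r0)) in Hc2. lra.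
Qed.
Definition DB (B : R -> R -> Prop) : Dom := fun u r s p => B u r /\ -1 <= s <= 1.

Lemma cont_on_sub (D D' : Dom) F : (forall u r s p, D' u r s p -> D u r s p) -> cont_on D F -> cont_on D' F.
Proof. intros Hs Hc u r s p Hd eps He. destruct (Hc u r s p (Hs _ _ _ _ Hd) eps He) as [d [Hd1 Hd2]].
  exists d; split; auto. Qed.

Definition jc (op : R -> R -> R) := forall a b eps, 0 < eps -> exists del, 0 < del /\
  forall x y, Rabs (x - a) < del -> Rabs (y - b) < del -> Rabs (op x y - op a b) < eps.

Lemma jc_plus : jc Rplus.
Proof. intros a b eps He. exists (eps/2); split; [lra|]. intros x y H1 H2.
  replace (x + y - (a + b)) with ((x - a) + (y - b)) by ring.
  replace eps with (eps/2+eps/2) by field. apply rabs_add_lt; auto. Qed.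

Lemma jc_mult : jc Rmult.
Proof.
  intros a b eps He.
  set (M := Rabs a + Rabs b + 1).
  assert (HM : 1 <= M) by (unfold M; pose proof (Rabs_pos a); pose proof (Rabs_pos b); lra).
  exists (Rmin 1 (eps / (2 * M))). split. { apply Rmin_pos; [lra| apply Rdiv_lt_0_compat; lra]. }
  intros x y H1 H2.
  assert (Hd1 : Rmin 1 (eps / (2*M)) <= 1) by apply Rmin_l.
  assert (Hd2 : Rmin 1 (eps / (2*M)) <= eps / (2*M)) by apply Rmin_r.
  set (d := Rmin 1 (eps / (2*M))) in *.
  replace (x * y - a * b) with ((x - a) * y + a * (y - b)) by ring.
  eapply Rle_lt_trans; [apply Rabs_triang|]. rewrite !Rabs_mult.
  assert (Hy : Rabs y <= Rabs b + 1).
  { pose proof (Rabs_triang (y - b) b). replace (y - b + b) with y in H by ring. lra. }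
  assert (Hdm : d * M <= eps / 2).
  { apply Rle_trans with (eps / (2*M) * M). apply Rmult_le_compat_r; lra.
    right; field; lra. }
  pose proof (Rabs_pos (x - a)); pose proof (Rabs_pos (y - b)); pose proof (Rabs_pos a).
  pose proof (Rabs_pos y).
  assert (Rabs (x - a) * Rabs y <= d * (Rabs b + 1)).
  { apply Rmult_le_compat; lra. }
  assert (Rabs a * Rabs (y - b) <= Rabs a * d) by (apply Rmult_le_compat_l; lra).
  unfold M in Hdm. nra.
Qed.

Lemma cont_on_op2 D op F G : jc op -> cont_on D F -> cont_on D G ->
  cont_on D (fun u r s p => op (F u r s p) (G u r s p)).
Proof.
  intros Hop HF HG u r s p Hd eps He.
  destruct (Hop (F u r s p) (G u r s p) eps He) as [d [Hd0 Hd1]].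
  destruct (HF u r s p Hd d Hd0) as [d1 [Hd1p Hd1']].
  destruct (HG u r s p Hd d Hd0) as [d2 [Hd2p Hd2']].
  exists (Rmin d1 d2); split; [apply Rmin_pos; auto|].
  intros u' r' s' p' Hd' H1 H2 H3 H4. apply Hd1.
  - apply Hd1'; auto; eapply Rlt_le_trans; eauto; apply Rmin_l.
  - apply Hd2'; auto; eapply Rlt_le_trans; eauto; apply Rmin_r.
Qed.

Lemma cont_on_const D c : cont_on D (fun _ _ _ _ => c).
Proof. intros u r s p _ eps He. exists 1; split; [lra|]. intros. rewrite Rminus_diag, Rabs_R0; auto. Qed.

Lemma cont_on_r D (g : R -> R) : (forall u r s p, D u r s p -> continuity_pt g r) ->
  cont_on D (fun u r s p => g r).
Proof. intros Hg u r s p Hd eps He. destruct (cont_ed g r (Hg u r s p Hd) eps He) as [d [Hd1 Hd2]].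
  exists d; split; auto. Qed.

Lemma rc_op2 a b op f g : jc op -> rc a b f -> rc a b g -> rc a b (fun x => op (f x) (g x)).
Proof.
  intros Hop Hf Hg x Hx eps He.
  destruct (Hop (f x) (g x) eps He) as [d [Hd0 Hd1]].
  destruct (Hf x Hx d Hd0) as [d1 [Hd1p Hd1']].
  destruct (Hg x Hx d Hd0) as [d2 [Hd2p Hd2']].
  exists (Rmin d1 d2); split; [apply Rmin_pos; auto|].
  intros y Hy Hyx. apply Hd1.
  - apply Hd1'; auto; eapply Rlt_le_trans; eauto; apply Rmin_l.
  - apply Hd2'; auto; eapply Rlt_le_trans; eauto; apply Rmin_r.
Qed.

Definition lip1 (f : R -> R) := forall x y, Rabs (f x - f y) <= Rabs (x - y).

Lemma lip1_id : lip1 (fun x => x). Proof. intros x y; lra. Qed.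
Lemma lip1_const c : lip1 (fun _ => c). Proof. intros x y; rewrite Rminus_diag, Rabs_R0; apply Rabs_pos. Qed.
Lemma lip1_neg c : lip1 (fun x => c - x).
Proof. intros x y. replace (c - x - (c - y)) with (- (x - y)) by ring. rewrite Rabs_Ropp; lra. Qed.

Lemma rc_line D X a b fu fr fs fp : cont_on D X ->
  (forall x, a <= x <= b -> D (fu x) (fr x) (fs x) (fp x)) ->
  lip1 fu -> lip1 fr -> lip1 fs -> lip1 fp ->
  rc a b (fun x => X (fu x) (fr x) (fs x) (fp x)).
Proof.
  intros Hc HD Hu Hr Hs Hp x Hx eps He.
  destruct (Hc _ _ _ _ (HD x Hx) eps He) as [d [Hd Hd']].
  exists d; split; auto. intros y Hy Hyx. apply Hd'; [auto| | | |].
  - eapply Rle_lt_trans; [apply Hu|apply Hyx].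
  - eapply Rle_lt_trans; [apply Hr|apply Hyx].
  - eapply Rle_lt_trans; [apply Hs|apply Hyx].
  - eapply Rle_lt_trans; [apply Hp|apply Hyx].
Qed.

Definition dist3 (x y : R * R * R) : R :=
  match x, y with (a, b, c), (a', b', c') => Rmax (Rabs (a' - a)) (Rmax (Rabs (b' - b)) (Rabs (c' - c))) end.

Lemma dist3_refl x d : 0 < d -> dist3 x x < d.
Proof. destruct x as [[a b] c]. simpl. rewrite !Rminus_diag, !Rabs_R0. unfold Rmax; repeat destruct Rle_dec; lra. Qed.

Lemma dist3_lt a b c a' b' c' d : Rabs (a' - a) < d -> Rabs (b' - b) < d -> Rabs (c' - c) < d ->
  dist3 (a, b, c) (a', b', c') < d.
Proof. intros; simpl; repeat apply Rmax_lub_lt; auto. Qed.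

Lemma dist3_inv a b c a' b' c' d : dist3 (a, b, c) (a', b', c') < d ->
  Rabs (a' - a) < d /\ Rabs (b' - b) < d /\ Rabs (c' - c) < d.
Proof. simpl; intros H.
  pose proof (Rmax_l (Rabs (a' - a)) (Rmax (Rabs (b' - b)) (Rabs (c' - c)))).
  pose proof (Rmax_r (Rabs (a' - a)) (Rmax (Rabs (b' - b)) (Rabs (c' - c)))).
  pose proof (Rmax_l (Rabs (b' - b)) (Rabs (c' - c))).
  pose proof (Rmax_r (Rabs (b' - b)) (Rabs (c' - c))). repeat split; lra. Qed.

Lemma exP B X u r s a b : cont_on (DB B) X -> B u r -> -1 <= s <= 1 ->
  ex_RInt (fun q => X u r s q) a b.
Proof.
  intros Hc HB Hs. apply (ex_RInt_continuous (V:=R_CompleteNormedModule)). intros z _.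
  apply continuity_pt_filterlim, ed_cont. intros eps He.
  destruct (Hc u r s z (conj HB Hs) eps He) as [d [Hd Hd']]. exists d; split; auto.
  intros y Hy. apply Hd'; auto; try (split; auto); rewrite Rminus_diag, Rabs_R0; auto.
Qed.

Lemma rcS B X u r p : cont_on (DB B) X -> B u r -> rc (-1) 1 (fun s => X u r s p).
Proof. intros Hc HB. apply (rc_line (DB B) X (-1) 1 (fun _ => u) (fun _ => r) (fun s => s) (fun _ => p));
  auto using lip1_id, lip1_const. intros; split; auto. Qed.

Lemma exS B X u r p : cont_on (DB B) X -> B u r -> ex_RInt (fun s => X u r s p) (-1) 1.
Proof. intros. apply rc_ex; [lra|]. apply rcS with B; auto. Qed.

Lemma contP B X : cont_on (DB B) X ->
  cont_on (DB B) (fun u r s p => RInt (fun q => X u r s q) 0 (2*PI)).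
Proof.
  intros Hc u r s p [HB Hs] eps He.
  assert (Hpi := PI_RGT_0).
  set (ok := fun x : R * R * R => match x with (a, b, c) => DB B a b c 0 end).
  set (F := fun (x : R * R * R) q => match x with (a, b, c) => X a b c q end).
  destruct (pcont dist3 ok F 0 (2*PI) (u, r, s)) with (eps := eps) as [d [Hd Hd']]; auto.
  - rewrite Rmin_left, Rmax_right by lra.
    apply (equicont dist3 ok F 0 (2*PI) (u, r, s)).
    + simpl; split; auto.
    + intros; apply dist3_refl; auto.
    + intros t Ht e He'. destruct (Hc u r s t (conj HB Hs) e He') as [d [Hd Hd']].
      exists d; split; auto. intros [[a b] c] t' Hok Ht' Hdist Htt.
      apply dist3_inv in Hdist as [H1 [H2 H3]]. simpl. apply Hd'; auto.
  - intros [[a b] c] [Hb Hc']. simpl. apply exP with B; auto.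
  - simpl; split; auto.
  - exists d; split; auto. intros u' r' s' p' [HB' Hs'] H1 H2 H3 H4.
    apply (Hd' (u', r', s')). simpl; split; auto. apply dist3_lt; auto.
Qed.

Lemma contS B X : cont_on (DB B) X ->
  cont_on (DB B) (fun u r s p => RInt (fun s' => X u r s' p) (-1) 1).
Proof.
  intros Hc u r s p [HB Hs] eps He.
  set (ok := fun x : R * R * R => match x with (a, b, c) => B a b end).
  set (F := fun (x : R * R * R) t => match x with (a, b, c) => X a b t c end).
  destruct (pcont dist3 ok F (-1) 1 (u, r, p)) with (eps := eps) as [d [Hd Hd']]; auto.
  - rewrite Rmin_left, Rmax_right by lra.
    apply (equicont dist3 ok F (-1) 1 (u, r, p)).
    + simpl; auto.
    + intros; apply dist3_refl; auto.
    + intros t Ht e He'. destruct (Hc u r t p (conj HB Ht) e He') as [d [Hd Hd']].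
      exists d; split; auto. intros [[a b] c] t' Hok Ht' Hdist Htt.
      apply dist3_inv in Hdist as [H1 [H2 H3]]. simpl. apply Hd'; auto. split; auto.
  - intros [[a b] c] Hb. simpl. apply exS with B; auto.
  - exists d; split; auto. intros u' r' s' p' [HB' Hs'] H1 H2 H3 H4.
    apply (Hd' (u', r', p')). simpl; auto. apply dist3_lt; auto.
Qed.

Definition I2 (X : F4) (u r : R) : R :=
  RInt (fun s => RInt (fun p => X u r s p) 0 (2*PI)) (-1) 1.

Lemma contI2 B X : cont_on (DB B) X -> cont_on (DB B) (fun u r s p => I2 X u r).
Proof. intros Hc. exact (contS B _ (contP B X Hc)). Qed.

Lemma I2_ext X Y u r : (forall s p, X u r s p = Y u r s p) -> I2 X u r = I2 Y u r.
Proof. intros H. unfold I2. apply RInt_ext; intros. apply RInt_ext; intros. auto. Qed.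

Lemma I2_add B X Y u r : cont_on (DB B) X -> cont_on (DB B) Y -> B u r ->
  I2 (fun u r s p => X u r s p + Y u r s p) u r = I2 X u r + I2 Y u r.
Proof.
  intros HX HY HB. unfold I2.
  rewrite <- RInt_add by (apply (exS B (fun u r s p => RInt (fun q => _ u r s q) 0 (2*PI)) u r 0);
     auto; apply contP; auto).
  apply RInt_ext. intros s Hs. rewrite Rmin_left, Rmax_right in Hs by lra.
  apply RInt_add; apply exP with B; auto; lra.
Qed.

Lemma I2_mulc B X c u r : cont_on (DB B) X -> B u r ->
  I2 (fun u r s p => c * X u r s p) u r = c * I2 X u r.
Proof.
  intros HX HB. unfold I2.
  rewrite <- RInt_mulc by (apply (exS B (fun u r s p => RInt (fun q => X u r s q) 0 (2*PI)) u r 0);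
     auto; apply contP; auto).
  apply RInt_ext. intros s Hs. rewrite Rmin_left, Rmax_right in Hs by lra.
  apply RInt_mulc; apply exP with B; auto; lra.
Qed.

Lemma I2_ge0 B X u r : cont_on (DB B) X -> B u r ->
  (forall s p, -1 <= s <= 1 -> 0 <= X u r s p) -> 0 <= I2 X u r.
Proof.
  intros HX HB Hp. assert (Hpi := PI_RGT_0). unfold I2. apply RInt_ge_0; [lra| |].
  - apply (exS B (fun u r s p => RInt (fun q => X u r s q) 0 (2*PI)) u r 0); auto; apply contP; auto.
  - intros s Hs. apply RInt_ge_0; [lra| apply exP with B; auto; lra|]. intros; apply Hp; lra.
Qed.
Lemma I2_du B X Xu u0 r eta : cont_on (DB B) X -> cont_on (DB B) Xu -> 0 < eta ->
  (forall x, Rabs (x - u0) < eta -> B x r) ->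
  (forall x s p, Rabs (x - u0) < eta -> -1 <= s <= 1 -> is_derive (fun z => X z r s p) x (Xu x r s p)) ->
  is_derive (fun z => I2 X z r) u0 (I2 Xu u0 r).
Proof.
  intros HX HXu Heta HB Hd. assert (Hpi := PI_RGT_0).
  assert (HB0 : B u0 r) by (apply HB; rewrite Rminus_diag, Rabs_R0; auto).
  assert (HXu1 := contP B Xu HXu).
  unfold I2.
  apply (leibniz (fun z s => RInt (fun p => X z r s p) 0 (2*PI))
                 (fun z s => RInt (fun p => Xu z r s p) 0 (2*PI)) (-1) 1 u0 eta); [lra | exact Heta | | | |].
  - intros x t Hx Ht.
    set (eta' := eta - Rabs (x - u0)).
    assert (Heta' : 0 < eta') by (unfold eta'; lra).
    assert (Hin : forall z, Rabs (z - x) < eta' -> Rabs (z - u0) < eta).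
    { intros z Hz. unfold eta' in Hz. pose proof (Rabs_triang (z - x) (x - u0)).
      replace (z - x + (x - u0)) with (z - u0) in H by ring. lra. }
    apply (leibniz (fun z p => X z r t p) (fun z p => Xu z r t p) 0 (2*PI) x eta');
      [lra | exact Heta' | intros z p Hz Hp; apply Hd; auto | intros z Hz; apply exP with B; auto |
       apply exP with B; auto | ].
    + intros e He.
      destruct (equicont (fun a b => Rabs (b - a)) (fun z => Rabs (z - x) < eta')
                 (fun z p => Xu z r t p) 0 (2*PI) x) with (eps := e) as [d [Hd1 Hd2]]; auto.
      * rewrite Rminus_diag, Rabs_R0; auto.
      * intros; rewrite Rminus_diag, Rabs_R0; auto.
      * intros t0 Ht0 e' He'. destruct (HXu x r t t0 (conj (HB x Hx) Ht) e' He') as [d [Hd1 Hd2]].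
        exists d; split; auto. intros z t' Hz Ht' Hzd Htt. apply Hd2; auto.
        split; auto. rewrite Rminus_diag, Rabs_R0; auto. rewrite Rminus_diag, Rabs_R0; auto.
      * exists d; split; auto.
  - intros x Hx. apply (exS B (fun u r s p => RInt (fun q => X u r s q) 0 (2*PI)) x r 0); auto.
    apply contP; auto.
  - apply (exS B (fun u r s p => RInt (fun q => Xu u r s q) 0 (2*PI)) u0 r 0); auto.
  - intros e He.
    destruct (equicont (fun a b => Rabs (b - a)) (fun z => Rabs (z - u0) < eta)
               (fun z s => RInt (fun p => Xu z r s p) 0 (2*PI)) (-1) 1 u0) with (eps := e)
      as [d [Hd1 Hd2]]; auto.
    + rewrite Rminus_diag, Rabs_R0; auto.
    + intros; rewrite Rminus_diag, Rabs_R0; auto.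
    + intros t0 Ht0 e' He'. destruct (HXu1 u0 r t0 0 (conj HB0 Ht0) e' He') as [d [Hd1 Hd2]].
      exists d; split; auto. intros z t' Hz Ht' Hzd Htt. apply (Hd2 z r t' 0); auto.
      split; auto. rewrite Rminus_diag, Rabs_R0; auto. rewrite Rminus_diag, Rabs_R0; auto.
    + exists d; split; auto.
Qed.

Definition swX (X : F4) : F4 := fun u r s p => X r u s p.

Lemma cont_on_sw B X : cont_on (DB B) X -> cont_on (DB (fun u r => B r u)) (swX X).
Proof. intros Hc u r s p [HB Hs] eps He. destruct (Hc r u s p (conj HB Hs) eps He) as [d [Hd Hd']].
  exists d; split; auto. intros u' r' s' p' [HB' Hs'] H1 H2 H3 H4. apply Hd'; auto. split; auto. Qed.

Lemma I2_dr B X Xr u r0' eta : cont_on (DB B) X -> cont_on (DB B) Xr -> 0 < eta ->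
  (forall x, Rabs (x - r0') < eta -> B u x) ->
  (forall x s p, Rabs (x - r0') < eta -> -1 <= s <= 1 -> is_derive (fun z => X u z s p) x (Xr u x s p)) ->
  is_derive (fun z => I2 X u z) r0' (I2 Xr u r0').
Proof.
  intros HX HXr Heta HB Hd.
  exact (I2_du (fun u r => B r u) (swX X) (swX Xr) r0' u eta (cont_on_sw B X HX) (cont_on_sw B Xr HXr)
           Heta HB Hd).
Qed.

Lemma dw_is_derive (f : R -> R) x d ok : deriv_within ok (fun t => f (x + t)) d ->
  (exists eta, 0 < eta /\ forall t, Rabs t < eta -> ok t) -> is_derive f x d.
Proof.
  intros Hd [eta [Heta Hok]]. apply is_derive_Reals. intros eps He.
  destruct (Hd eps He) as [del [Hdel Hdel']].
  exists (mkposreal (Rmin del eta) (Rmin_pos _ _ Hdel Heta)). simpl. intros h Hh0 Hh.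
  pose proof (Rmin_l del eta); pose proof (Rmin_r del eta).
  specialize (Hdel' h Hh0 ltac:(lra) (Hok h ltac:(lra))). rewrite Rplus_0_r in Hdel'. exact Hdel'.
Qed.

Lemma is_derive_mul (f g : R -> R) x df dg : is_derive f x df -> is_derive g x dg ->
  is_derive (fun t => f t * g t) x (df * g x + f x * dg).
Proof.
  intros Hf Hg. apply is_derive_Reals. apply is_derive_Reals in Hf, Hg.
  exact (derivable_pt_lim_mult f g x df dg Hf Hg).
Qed.

Lemma is_derive_sq (f : R -> R) x df : is_derive f x df ->
  is_derive (fun t => f t ^ 2) x (2 * f x * df).
Proof.
  intros Hf. apply is_derive_ext with (fun t => f t * f t). { intros t; change (f t * f t = f t ^ 2); ring. }
  apply (is_derive_eq _ _ _ _ (is_derive_mul f f x df df Hf Hf)). change (df * f x + f x * df = 2 * f x * df). ring.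
Qed.

Lemma is_derive_add (f g : R -> R) x df dg : is_derive f x df -> is_derive g x dg ->
  is_derive (fun t => f t + g t) x (df + dg).
Proof. intros; apply (is_derive_plus (K:=R_AbsRing) (V:=R_NormedModule)); auto. Qed.

Lemma is_derive_sub (f g : R -> R) x df dg : is_derive f x df -> is_derive g x dg ->
  is_derive (fun t => f t - g t) x (df - dg).
Proof. intros; apply (is_derive_minus (K:=R_AbsRing) (V:=R_NormedModule)); auto. Qed.

Lemma cont2_of_cont_on B Y (f g : R -> R -> R) : cont_on (DB B) Y ->
  (forall x y, B (f x y) (g x y)) ->
  (forall x y x' y', Rabs (f x' y' - f x y) <= Rabs (x' - x) + Rabs (y' - y)) ->
  (forall x y x' y', Rabs (g x' y' - g x y) <= Rabs (x' - x) + Rabs (y' - y)) ->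
  cont2 (fun x y => Y (f x y) (g x y) 0 0).
Proof.
  intros Hc HB Hf Hg x y eps He. assert (H01 : -1 <= 0 <= 1) by lra.
  destruct (Hc (f x y) (g x y) 0 0 (conj (HB x y) H01) eps He) as [d [Hd Hd']].
  exists (d/2); split; [lra|]. intros x' y' H1 H2. apply Hd'.
  - split; [apply HB | lra].
  - specialize (Hf x y x' y'); lra.
  - specialize (Hg x y x' y'); lra.
  - rewrite Rminus_diag, Rabs_R0; lra.
  - rewrite Rminus_diag, Rabs_R0; lra.
Qed.

Lemma clamp_lip2 a b b' x x' : a <= b -> a <= b' ->
  Rabs (clamp a b' x' - clamp a b x) <= Rabs (b' - b) + Rabs (x' - x).
Proof. intros; unfold clamp, Rmax, Rmin; repeat destruct Rle_dec; unfold Rabs; repeat destruct Rcase_abs; lra. Qed.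

Ltac rring := match goal with |- ?a = ?b => change (@eq R a b) end; ring.
Ltac rfield := match goal with |- ?a = ?b => change (@eq R a b) end; field.

Definition B0 (r0 T : R) : R -> R -> Prop := fun u r => 0 <= u /\ r0 <= r /\ u + r <= T + r0.

Lemma DT_DB r0 T u r s p : DT r0 T u r s p <-> DB (B0 r0 T) u r s p.
Proof. unfold DT, DB, B0; tauto. Qed.

Lemma C1_cont r0 T F Fu Fr Fs Fp : C1_on (DT r0 T) F Fu Fr Fs Fp ->
  cont_on (DB (B0 r0 T)) F /\ cont_on (DB (B0 r0 T)) Fu /\ cont_on (DB (B0 r0 T)) Fr /\
  cont_on (DB (B0 r0 T)) Fs /\ cont_on (DB (B0 r0 T)) Fp.
Proof.
  intros [H1 [H2 [H3 [H4 [H5 _]]]]].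
  repeat split; eapply cont_on_sub; try eassumption; intros; apply DT_DB; auto.
Qed.

Lemma C1_ds r0 T F Fu Fr Fs Fp u r s p : C1_on (DT r0 T) F Fu Fr Fs Fp ->
  DT r0 T u r s p -> Rabs s < 1 -> is_derive (fun z => F u r z p) s (Fs u r s p).
Proof.
  intros [_ [_ [_ [_ [_ Hd]]]]] HD Hs. destruct (Hd u r s p HD) as [_ [_ [H _]]].
  apply dw_is_derive with (1 := H). exists (1 - Rabs s); split; [lra|].
  intros t Ht. destruct HD as [A [B [C E]]]. split; auto. split; auto. split; auto.
  revert Ht Hs; unfold Rabs; repeat destruct Rcase_abs; intros; lra.
Qed.

Lemma C1_dp r0 T F Fu Fr Fs Fp u r s p : C1_on (DT r0 T) F Fu Fr Fs Fp ->
  DT r0 T u r s p -> is_derive (fun z => F u r s z) p (Fp u r s p).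
Proof.
  intros [_ [_ [_ [_ [_ Hd]]]]] HD. destruct (Hd u r s p HD) as [_ [_ [_ H]]].
  apply dw_is_derive with (1 := H). exists 1; split; [lra|].
  intros t Ht. exact HD.
Qed.

Lemma C1_du r0 T F Fu Fr Fs Fp u r s p : C1_on (DT r0 T) F Fu Fr Fs Fp ->
  0 < u -> r0 <= r -> u + r < T + r0 -> -1 <= s <= 1 ->
  is_derive (fun z => F z r s p) u (Fu u r s p).
Proof.
  intros [_ [_ [_ [_ [_ Hd]]]]] H1 H2 H3 H4.
  destruct (Hd u r s p ltac:(repeat split; lra)) as [H _].
  apply dw_is_derive with (1 := H). exists (Rmin u (T + r0 - u - r)); split.
  { apply Rmin_pos; lra. }
  intros t Ht. pose proof (Rmin_l u (T + r0 - u - r)). pose proof (Rmin_r u (T + r0 - u - r)).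
  revert Ht; unfold Rabs; destruct Rcase_abs; intros; repeat split; lra.
Qed.

Lemma C1_dr r0 T F Fu Fr Fs Fp u r s p : C1_on (DT r0 T) F Fu Fr Fs Fp ->
  0 <= u -> r0 < r -> u + r < T + r0 -> -1 <= s <= 1 ->
  is_derive (fun z => F u z s p) r (Fr u r s p).
Proof.
  intros [_ [_ [_ [_ [_ Hd]]]]] H1 H2 H3 H4.
  destruct (Hd u r s p ltac:(repeat split; lra)) as [_ [H _]].
  apply dw_is_derive with (1 := H). exists (Rmin (r - r0) (T + r0 - u - r)); split.
  { apply Rmin_pos; lra. }
  intros t Ht. pose proof (Rmin_l (r - r0) (T + r0 - u - r)). pose proof (Rmin_r (r - r0) (T + r0 - u - r)).
  revert Ht; unfold Rabs; destruct Rcase_abs; intros; repeat split; lra.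
Qed.

Lemma cont_on_ext D F G : (forall u r s p, F u r s p = G u r s p) -> cont_on D F -> cont_on D G.
Proof. intros He Hc u r s p Hd eps Heps. destruct (Hc u r s p Hd eps Heps) as [d [Hd1 Hd2]].
  exists d; split; auto. intros. rewrite <- !He; auto. Qed.

Lemma cont_on_pow2 D F : cont_on D F -> cont_on D (fun u r s p => F u r s p ^ 2).
Proof. intros Hc. apply cont_on_ext with (fun u r s p => Rmult (F u r s p) (F u r s p)).
  intros; ring. apply cont_on_op2; auto. apply jc_mult. Qed.

Lemma cont_inv_r r0 T : 0 < r0 -> cont_on (DB (B0 r0 T)) (fun u r s p => / r).
Proof. intros Hr. apply (cont_on_r _ Rinv). intros u r s p [[_ [H _]] _].
  apply (continuity_pt_inv (fun x => x) r (continuity_pt_id r)). lra. Qed.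

Ltac cont_tac r0 T :=
  repeat first [ assumption
               | apply cont_on_const
               | apply (cont_inv_r r0 T); assumption
               | apply cont_on_pow2
               | apply (cont_on_op2 _ Rplus); [apply jc_plus| |]
               | apply (cont_on_op2 _ Rmult); [apply jc_mult| |] ].

Lemma rc_const a b c : rc a b (fun _ => c).
Proof. intros x _ eps He. exists 1; split; [lra|]. intros. rewrite Rminus_diag, Rabs_R0; auto. Qed.

Lemma is_derive_c (c x : R) : is_derive (fun _ => c) x 0.
Proof. apply (is_derive_const (K:=R_AbsRing) (V:=R_NormedModule)). Qed.

Lemma is_derive_x (x : R) : is_derive (fun z => z) x 1.
Proof. apply (is_derive_id (K:=R_AbsRing)). Qed.

Lemma RInt_lin3 (f g h : R -> R) a b c x y : ex_RInt f x y -> ex_RInt g x y -> ex_RInt h x y ->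
  RInt (fun t => a * f t + b * g t + c * h t) x y = a * RInt f x y + b * RInt g x y + c * RInt h x y.
Proof.
  intros Hf Hg Hh.
  rewrite RInt_add by (try apply ex_RInt_add; apply ex_RInt_mulc; auto).
  rewrite RInt_add by (apply ex_RInt_mulc; auto).
  rewrite !RInt_mulc by auto. reflexivity.
Qed.

Lemma key_identity (r0 T : R) (R_ Ru Rr Rs Rp P Pu Pr Ps Pp Q Qu Qr Qs Qp : F4) :
  0 < r0 -> 0 < T ->
  C1_on (DT r0 T) R_ Ru Rr Rs Rp ->
  C1_on (DT r0 T) P Pu Pr Ps Pp ->
  C1_on (DT r0 T) Q Qu Qr Qs Qp ->
  periodic_phi (DT r0 T) R_ ->
  periodic_phi (DT r0 T) Q ->
  (forall u r s p, DT r0 T u r s p -> Rabs s < 1 ->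
     2 * Ru u r s p =
       Rr u r s p + sqrt (1 - s ^ 2) / r * Ps u r s p
       + 1 / (r * sqrt (1 - s ^ 2)) * Qp u r s p
       - s * P u r s p / (r * sqrt (1 - s ^ 2))
     /\ Pr u r s p = sqrt (1 - s ^ 2) / r * Rs u r s p - P u r s p / r
     /\ Qr u r s p = 1 / (r * sqrt (1 - s ^ 2)) * Rp u r s p - Q u r s p / r) ->
  forall u r, B0 r0 T u r ->
  I2 (fun u r s p => 2 * R_ u r s p * Ru u r s p + -1/2 * (2 * R_ u r s p * Rr u r s p)
        + 1/2 * (2 * P u r s p * Pr u r s p + 2 * Q u r s p * Qr u r s p)
        + (P u r s p ^ 2 + Q u r s p ^ 2) * / r) u r = 0.
Proof.
  intros Hr0 HT CR CP CQ perR perQ Hsys u r HB.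
  destruct (C1_cont _ _ _ _ _ _ _ CR) as [cR [cRu [cRr [cRs cRp]]]].
  destruct (C1_cont _ _ _ _ _ _ _ CP) as [cP [cPu [cPr [cPs cPp]]]].
  destruct (C1_cont _ _ _ _ _ _ _ CQ) as [cQ [cQu [cQr [cQs cQp]]]].
  assert (Hpi := PI_RGT_0).
  assert (Hrpos : 0 < r) by (destruct HB as [_ [H _]]; lra).
  set (XG := fun u r s p => 2 * R_ u r s p * Ru u r s p + -1/2 * (2 * R_ u r s p * Rr u r s p)
        + 1/2 * (2 * P u r s p * Pr u r s p + 2 * Q u r s p * Qr u r s p)
        + (P u r s p ^ 2 + Q u r s p ^ 2) * / r).
  assert (cXG : cont_on (DB (B0 r0 T)) XG) by (unfold XG; cont_tac r0 T).
  set (X1 := fun u r s p => Rs u r s p * P u r s p + R_ u r s p * Ps u r s p).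
  set (X2 := fun u r s p => R_ u r s p * P u r s p).
  set (X3 := fun u r s p => Rp u r s p * Q u r s p + R_ u r s p * Qp u r s p).
  set (X4 := fun u r s p => R_ u r s p * Q u r s p).
  assert (cX1 : cont_on (DB (B0 r0 T)) X1) by (unfold X1; cont_tac r0 T).
  assert (cX2 : cont_on (DB (B0 r0 T)) X2) by (unfold X2; cont_tac r0 T).
  assert (cX3 : cont_on (DB (B0 r0 T)) X3) by (unfold X3; cont_tac r0 T).
  assert (cX4 : cont_on (DB (B0 r0 T)) X4) by (unfold X4; cont_tac r0 T).
  assert (HDs : forall s p, -1 <= s <= 1 -> DT r0 T u r s p).
  { intros s p Hs. destruct HB as [A [B C]]. unfold DT; tauto. }
  assert (Hline : forall X, cont_on (DB (B0 r0 T)) X -> forall s, -1 <= s <= 1 ->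
            rc 0 (2*PI) (fun p => X u r s p)).
  { intros X HX s Hs. apply (rc_line (DB (B0 r0 T)) X 0 (2*PI) (fun _ => u) (fun _ => r) (fun _ => s) (fun p => p));
      auto using lip1_const, lip1_id. intros; split; auto. }
  assert (I3 : forall s, -1 <= s <= 1 -> RInt (fun p => X3 u r s p) 0 (2*PI) = 0).
  { intros s Hs. rewrite (FTC (fun p => X4 u r s p) (fun p => X3 u r s p) 0 (2*PI)).
    - unfold X4. replace (2*PI) with (0 + 2*PI) by ring. rewrite perR, perQ by auto. apply Rminus_diag_eq; reflexivity.
    - lra.
    - apply Hline; auto.
    - apply Hline; auto.
    - intros p Hp. unfold X3, X4.
      apply (is_derive_eq _ _ _ _ (is_derive_mul _ _ p _ _
               (C1_dp _ _ _ _ _ _ _ _ _ _ _ CR (HDs s p Hs)) (C1_dp _ _ _ _ _ _ _ _ _ _ _ CQ (HDs s p Hs)))).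
      rring. }
  set (K := fun s => RInt (fun p => X2 u r s p) 0 (2*PI)).
  assert (DK : forall s, Rabs s < 1 -> is_derive K s (RInt (fun p => X1 u r s p) 0 (2*PI))).
  { intros s Hs. unfold K.
    assert (Hin : forall z, Rabs (z - s) < 1 - Rabs s -> Rabs z < 1).
    { intros z Hz. pose proof (Rabs_triang (z - s) s). replace (z - s + s) with z in H by ring. lra. }
    assert (Hin2 : forall z, Rabs z < 1 -> -1 <= z <= 1).
    { intros z Hz. revert Hz; unfold Rabs; destruct Rcase_abs; intros; lra. }
    apply (leibniz (fun z p => X2 u r z p) (fun z p => X1 u r z p) 0 (2*PI) s (1 - Rabs s));
      [lra | lra | | | | ].
    - intros z p Hz Hp. unfold X1, X2. specialize (Hin z Hz).
      apply (is_derive_eq _ _ _ _ (is_derive_mul _ _ z _ _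
               (C1_ds _ _ _ _ _ _ _ _ _ _ _ CR (HDs z p (Hin2 z Hin)) Hin)
               (C1_ds _ _ _ _ _ _ _ _ _ _ _ CP (HDs z p (Hin2 z Hin)) Hin))). rring.
    - intros z Hz. apply exP with (B0 r0 T); auto.
    - apply exP with (B0 r0 T); auto.
    - intros e He.
      destruct (equicont (fun a b => Rabs (b - a)) (fun z => -1 <= z <= 1) (fun z p => X1 u r z p)
                 0 (2*PI) s) with (eps := e) as [d [Hd1 Hd2]]; auto.
      + intros d0 Hd0; rewrite Rminus_diag, Rabs_R0; auto.
      + intros t Ht e' He'. destruct (cX1 u r s t (conj HB (Hin2 s Hs)) e' He') as [d [Hd1 Hd2]].
        exists d; split; auto. intros z t' Hz Ht' Hzd Htt. apply Hd2; auto.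
        split; auto. rewrite Rminus_diag, Rabs_R0; auto. rewrite Rminus_diag, Rabs_R0; auto.
      + exists d; split; [auto|]. intros x t Hx Hxd Ht. apply Hd2; auto. }
  set (W := fun s => sqrt (1 - s ^ 2) * K s * / r).
  set (J := fun s => RInt (fun p => XG u r s p) 0 (2*PI)).
  assert (DW : forall s, -1 < s < 1 -> is_derive W s (J s)).
  { intros s Hs.
    assert (Hs1 : Rabs s < 1) by (unfold Rabs; destruct Rcase_abs; lra).
    assert (Hw : 0 < 1 - s^2) by nra.
    assert (Hwpos : 0 < sqrt (1 - s^2)) by (apply sqrt_lt_R0; auto).
    assert (Dsq : is_derive (fun z => sqrt (1 - z^2)) s ((0 - 2 * s * 1) / (2 * sqrt (1 - s^2)))).
    { apply (is_derive_sqrt (fun z => 1 - z^2) s).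
      apply is_derive_sub. apply is_derive_c. apply is_derive_sq, is_derive_x. exact Hw. }
    assert (DW0 := is_derive_mul _ _ s _ _ (is_derive_mul _ _ s _ _ Dsq (DK s Hs1)) (is_derive_c (/r) s)).
    unfold W. apply (is_derive_eq _ _ _ _ DW0).
    unfold J.
    rewrite (RInt_ext (fun p => XG u r s p)
       (fun p => (/r * sqrt (1 - s^2)) * X1 u r s p + (/r * (- s / sqrt (1 - s^2))) * X2 u r s p
                 + / (r * sqrt (1 - s^2)) * X3 u r s p)).
    2:{ intros p _. unfold XG, X1, X2, X3.
        destruct (Hsys u r s p (HDs s p ltac:(lra)) Hs1) as [E1 [E2 E3]].
        replace (2 * R_ u r s p * Ru u r s p) with (R_ u r s p * (2 * Ru u r s p)) by ring.
        rewrite E1, E2, E3. rfield. split; lra. }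
    rewrite RInt_lin3 by (apply exP with (B0 r0 T); auto; lra).
    rewrite I3 by lra. unfold K. change (RInt (X1 u r s) 0 (2*PI)) with (RInt (fun p => X1 u r s p) 0 (2*PI)). change (RInt (X2 u r s) 0 (2*PI)) with (RInt (fun p => X2 u r s p) 0 (2*PI)). rfield. split; lra. }
  change (RInt J (-1) 1 = 0).
  rewrite (FTC W J (-1) 1).
  - unfold W. replace (1 - 1 ^ 2) with 0 by ring. replace (1 - (-1) ^ 2) with 0 by ring.
    rewrite sqrt_0. rring.
  - lra.
  - unfold W. apply rc_op2; [apply jc_mult| |apply rc_const].
    apply rc_op2; [apply jc_mult| |].
    + apply cont_rc. intros x Hx. reg; nra.
    + unfold K. apply (rc_line (DB (B0 r0 T)) (fun u r s p => RInt (fun q => X2 u r s q) 0 (2*PI)) (-1) 1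
                   (fun _ => u) (fun _ => r) (fun s => s) (fun _ => 0));
        auto using lip1_const, lip1_id. apply contP; auto. intros; split; auto.
  - unfold J. apply (rc_line (DB (B0 r0 T)) (fun u r s p => RInt (fun q => XG u r s q) 0 (2*PI)) (-1) 1
                   (fun _ => u) (fun _ => r) (fun s => s) (fun _ => 0));
        auto using lip1_const, lip1_id. apply contP; auto. intros; split; auto.
  - exact DW.
Qed.

Lemma jc_minus : jc Rminus.
Proof. intros a b eps He. exists (eps/2); split; [lra|]. intros x y H1 H2.
  replace (x - y - (a - b)) with ((x - a) - (y - b)) by ring.
  replace eps with (eps/2+eps/2) by field. apply rabs_sub_lt; auto. Qed.

Lemma rcI2 B X a b fu fr : cont_on (DB B) X -> lip1 fu -> lip1 fr ->
  (forall x, a <= x <= b -> B (fu x) (fr x)) -> rc a b (fun x => I2 X (fu x) (fr x)).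
Proof.
  intros Hc Hu Hr HB.
  apply (rc_line (DB B) (fun u r s p => I2 X u r) a b fu fr (fun _ => 0) (fun _ => 0));
    auto using lip1_const. apply contI2; auto. intros x Hx; split; auto; lra.
Qed.

Lemma subst_lemma (h : R -> R) T r0 : ex_RInt h 0 T ->
  RInt h 0 T = RInt (fun r => h (T + r0 - r)) r0 (T + r0).
Proof.
  intros Hex.
  pose proof (RInt_comp_lin (V:=R_CompleteNormedModule) h (-1) (T + r0) r0 (T + r0)) as Hl.
  replace (-1 * r0 + (T + r0)) with T in Hl by ring.
  replace (-1 * (T + r0) + (T + r0)) with 0 in Hl by ring.
  rewrite (RInt_ext (fun y : R => scal (-1) (h (-1 * y + (T + r0)))) (fun y => -1 * h (T + r0 - y))) in Hl.
  2:{ intros x _. change (-1 * h (-1 * x + (T + r0)) = -1 * h (T + r0 - x)).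
      replace (-1 * x + (T + r0)) with (T + r0 - x) by ring. reflexivity. }
  assert (Hex2 : ex_RInt h T 0) by (apply ex_RInt_swap; auto).
  specialize (Hl Hex2).
  rewrite <- (opp_RInt_swap (V:=R_CompleteNormedModule) h 0 T Hex) in Hl.
  assert (Hex3 : ex_RInt (fun y => h (T + r0 - y)) r0 (T + r0)).
  { apply ex_RInt_ext with (fun y => -1 * (-1 * h (T + r0 - y))). intros; rring.
    apply ex_RInt_mulc.
    apply (ex_RInt_ext (fun y : R => scal (-1) (h (-1 * y + (T + r0))))).
    - intros x _. change (-1 * h (-1 * x + (T + r0)) = -1 * h (T + r0 - x)).
      replace (-1 * x + (T + r0)) with (T + r0 - x) by ring. reflexivity.
    - apply (ex_RInt_comp_lin h (-1) (T + r0) r0 (T + r0)).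
      replace (-1 * r0 + (T + r0)) with T by ring.
      replace (-1 * (T + r0) + (T + r0)) with 0 by ring. auto. }
  rewrite RInt_mulc in Hl by auto.
  change (-1 * RInt (fun y => h (T + r0 - y)) r0 (T + r0) = - RInt h 0 T) in Hl. lra.
Qed.

Lemma cont2_diag_pt (G : R -> R -> R) c x0 : cont2 G -> continuity_pt (fun x => G x (c - x)) x0.
Proof.
  intros Hc. apply ed_cont. intros eps He. destruct (Hc x0 (c - x0) eps He) as [d [Hd Hd']].
  exists (d/2); split; [lra|]. intros y Hy. apply Hd'. lra.
  replace (c - y - (c - x0)) with (- (y - x0)) by ring. rewrite Rabs_Ropp; lra.
Qed.

Theorem theorem2 (r0 T : R) (R_ Ru Rr Rs Rp P Pu Pr Ps Pp Q Qu Qr Qs Qp : F4) :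
  0 < r0 -> 0 < T ->
  C1_on (DT r0 T) R_ Ru Rr Rs Rp ->
  C1_on (DT r0 T) P Pu Pr Ps Pp ->
  C1_on (DT r0 T) Q Qu Qr Qs Qp ->
  periodic_phi (DT r0 T) R_ ->
  periodic_phi (DT r0 T) P ->
  periodic_phi (DT r0 T) Q ->
  (forall u r s p, DT r0 T u r s p -> Rabs s < 1 ->
     2 * Ru u r s p =
       Rr u r s p + sqrt (1 - s ^ 2) / r * Ps u r s p
       + 1 / (r * sqrt (1 - s ^ 2)) * Qp u r s p
       - s * P u r s p / (r * sqrt (1 - s ^ 2))
     /\ Pr u r s p = sqrt (1 - s ^ 2) / r * Rs u r s p - P u r s p / r
     /\ Qr u r s p = 1 / (r * sqrt (1 - s ^ 2)) * Rp u r s p - Q u r s p / r) ->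
  normT2 r0 T R_ P Q <= 2 * (int_Sigma_u r0 T R_ + int_Sigma_r r0 T P Q).
Proof.
  intros Hr0 HT CR CP CQ perR perP perQ Hsys.
  assert (KI := key_identity r0 T R_ Ru Rr Rs Rp P Pu Pr Ps Pp Q Qu Qr Qs Qp Hr0 HT CR CP CQ perR perQ Hsys).
  destruct (C1_cont _ _ _ _ _ _ _ CR) as [cR [cRu [cRr [cRs cRp]]]].
  destruct (C1_cont _ _ _ _ _ _ _ CP) as [cP [cPu [cPr [cPs cPp]]]].
  destruct (C1_cont _ _ _ _ _ _ _ CQ) as [cQ [cQu [cQr [cQs cQp]]]].
  set (XR := fun u r s p => R_ u r s p ^ 2).
  set (XPQ := fun u r s p => P u r s p ^ 2 + Q u r s p ^ 2).
  set (XEu := fun u r s p => 2 * R_ u r s p * Ru u r s p).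
  set (XEr := fun u r s p => 2 * R_ u r s p * Rr u r s p).
  set (XF := fun u r s p => 2 * P u r s p * Pr u r s p + 2 * Q u r s p * Qr u r s p).
  set (XK := fun u r s p => (P u r s p ^ 2 + Q u r s p ^ 2) * / r).
  set (BB := B0 r0 T).
  assert (cXR : cont_on (DB BB) XR) by (unfold XR; cont_tac r0 T).
  assert (cXPQ : cont_on (DB BB) XPQ) by (unfold XPQ; cont_tac r0 T).
  assert (cXEu : cont_on (DB BB) XEu) by (unfold XEu; cont_tac r0 T).
  assert (cXEr : cont_on (DB BB) XEr) by (unfold XEr; cont_tac r0 T).
  assert (cXF : cont_on (DB BB) XF) by (unfold XF; cont_tac r0 T).
  assert (cXK : cont_on (DB BB) XK) by (unfold XK; cont_tac r0 T).
  assert (Hpos : forall u r, BB u r -> 0 < r) by (intros u r [_ [H _]]; lra).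
  assert (Id : forall u r, BB u r -> I2 XEu u r = 1/2 * I2 XEr u r - 1/2 * I2 XF u r - I2 XK u r).
  { intros u r HB. specialize (KI u r HB).
    change (I2 (fun u r s p => XEu u r s p + -1/2 * XEr u r s p + 1/2 * XF u r s p + XK u r s p) u r = 0) in KI.
    rewrite (I2_add BB (fun u r s p => XEu u r s p + -1/2 * XEr u r s p + 1/2 * XF u r s p) XK) in KI;
      auto; [| cont_tac r0 T].
    rewrite (I2_add BB (fun u r s p => XEu u r s p + -1/2 * XEr u r s p) (fun u r s p => 1/2 * XF u r s p)) in KI;
      auto; [| cont_tac r0 T | cont_tac r0 T].
    rewrite (I2_add BB XEu (fun u r s p => -1/2 * XEr u r s p)) in KI; auto; [| cont_tac r0 T].
    rewrite (I2_mulc BB XEr) in KI by auto. rewrite (I2_mulc BB XF) in KI by auto. lra. }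
  assert (Kpos : forall u r, BB u r -> 0 <= I2 XK u r).
  { intros u r HB. apply I2_ge0 with BB; auto. intros s p _. unfold XK.
    apply Rmult_le_pos. pose proof (pow2_ge_0 (P u r s p)); pose proof (pow2_ge_0 (Q u r s p)); lra.
    left; apply Rinv_0_lt_compat; eauto. }
  assert (HA : forall r, r0 <= r <= T + r0 ->
     RInt (fun u => I2 XEu u r) 0 (T + r0 - r) = I2 XR (T + r0 - r) r - I2 XR 0 r).
  { intros r Hr. apply (FTC (fun u => I2 XR u r) (fun u => I2 XEu u r)).
    - lra.
    - apply rcI2 with BB; auto using lip1_id, lip1_const. intros x Hx; unfold BB, B0; lra.
    - apply rcI2 with BB; auto using lip1_id, lip1_const. intros x Hx; unfold BB, B0; lra.
    - intros x Hx.
      apply (I2_du BB XR XEu x r (Rmin x (T + r0 - r - x))); auto.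
      + apply Rmin_pos; lra.
      + intros y Hy. pose proof (Rmin_l x (T + r0 - r - x)). pose proof (Rmin_r x (T + r0 - r - x)).
        revert Hy; unfold Rabs; destruct Rcase_abs; intros; unfold BB, B0; lra.
      + intros y s p Hy Hs. pose proof (Rmin_l x (T + r0 - r - x)). pose proof (Rmin_r x (T + r0 - r - x)).
        unfold XR, XEu; cbv beta. apply (is_derive_sq (fun z => R_ z r s p)).
        apply (C1_du _ _ _ _ _ _ _ _ _ _ _ CR); auto;
        revert Hy; unfold Rabs; destruct Rcase_abs; intros; lra. }
  assert (HBt : forall u, 0 <= u <= T ->
     RInt (fun r => I2 XEr u r - I2 XF u r) r0 (T + r0 - u) =
     (I2 XR u (T + r0 - u) - I2 XPQ u (T + r0 - u)) - (I2 XR u r0 - I2 XPQ u r0)).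
  { intros u Hu. apply (FTC (fun r => I2 XR u r - I2 XPQ u r) (fun r => I2 XEr u r - I2 XF u r)).
    - lra.
    - apply rc_op2; [apply jc_minus| |];
      apply rcI2 with BB; auto using lip1_id, lip1_const; intros x Hx; unfold BB, B0; lra.
    - apply rc_op2; [apply jc_minus| |];
      apply rcI2 with BB; auto using lip1_id, lip1_const; intros x Hx; unfold BB, B0; lra.
    - intros x Hx.
      pose proof (Rmin_l (x - r0) (T + r0 - u - x)). pose proof (Rmin_r (x - r0) (T + r0 - u - x)).
      assert (Hm : 0 < Rmin (x - r0) (T + r0 - u - x)) by (apply Rmin_pos; lra).
      assert (HBy : forall y, Rabs (y - x) < Rmin (x - r0) (T + r0 - u - x) -> r0 < y /\ u + y < T + r0).
      { intros y Hy. revert Hy; unfold Rabs; destruct Rcase_abs; intros; lra. }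
      apply is_derive_sub.
      + apply (I2_dr BB XR XEr u x (Rmin (x - r0) (T + r0 - u - x))); auto.
        * intros y Hy. destruct (HBy y Hy); unfold BB, B0; lra.
        * intros y s p Hy Hs. destruct (HBy y Hy). unfold XR, XEr; cbv beta. apply (is_derive_sq (fun z => R_ u z s p)).
          apply (C1_dr _ _ _ _ _ _ _ _ _ _ _ CR); auto; lra.
      + apply (I2_dr BB XPQ XF u x (Rmin (x - r0) (T + r0 - u - x))); auto.
        * intros y Hy. destruct (HBy y Hy); unfold BB, B0; lra.
        * intros y s p Hy Hs. destruct (HBy y Hy). unfold XPQ, XF; cbv beta. apply (is_derive_add (fun z => P u z s p ^ 2) (fun z => Q u z s p ^ 2)); [apply (is_derive_sq (fun z => P u z s p))|apply (is_derive_sq (fun z => Q u z s p))].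
          apply (C1_dr _ _ _ _ _ _ _ _ _ _ _ CP); auto; lra.
          apply (C1_dr _ _ _ _ _ _ _ _ _ _ _ CQ); auto; lra. }
  set (cu := fun u => clamp 0 T u).
  set (Et := fun u r => I2 XEu (cu u) (clamp r0 (T + r0 - cu u) r)).
  assert (Hcu : forall u, 0 <= cu u <= T) by (intros; apply clamp_in; lra).
  assert (cEt : cont2 Et).
  { unfold Et. apply (cont2_of_cont_on BB (fun u r s p => I2 XEu u r) (fun x y => cu x)
                       (fun x y => clamp r0 (T + r0 - cu x) y)).
    - apply contI2; auto.
    - intros x y. specialize (Hcu x). pose proof (clamp_in r0 (T + r0 - cu x) y ltac:(lra)).
      unfold BB, B0; lra.
    - intros x y x' y'. unfold cu. pose proof (clamp_lip 0 T x' x ltac:(lra)).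
      pose proof (Rabs_pos (y' - y)); lra.
    - intros x y x' y'. pose proof (Hcu x'); specialize (Hcu x).
      eapply Rle_trans. apply clamp_lip2; lra.
      replace (T + r0 - cu x' - (T + r0 - cu x)) with (- (cu x' - cu x)) by ring.
      rewrite Rabs_Ropp. unfold cu. pose proof (clamp_lip 0 T x' x ltac:(lra)). lra. }
  assert (Fub := fubini_tri Et r0 (T + r0) cEt ltac:(lra)).
  replace (T + r0 - r0) with T in Fub by ring.
  assert (EtL : forall r, r0 < r < T + r0 -> RInt (fun u => Et u r) 0 (T + r0 - r) = RInt (fun u => I2 XEu u r) 0 (T + r0 - r)).
  { intros r Hr. apply RInt_ext. intros x Hx. rewrite Rmin_left, Rmax_right in Hx by lra.
    unfold Et, cu. rewrite (clamp_id 0 T x) by lra. rewrite clamp_id by lra. reflexivity. }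
  assert (EtR : forall u, 0 < u < T -> RInt (fun r => Et u r) r0 (T + r0 - u) = RInt (fun r => I2 XEu u r) r0 (T + r0 - u)).
  { intros u Hu. apply RInt_ext. intros x Hx. rewrite Rmin_left, Rmax_right in Hx by lra.
    unfold Et, cu. rewrite (clamp_id 0 T u) by lra. rewrite clamp_id by lra. reflexivity. }
  assert (S12 : RInt (fun r => RInt (fun u => I2 XEu u r) 0 (T + r0 - r)) r0 (T + r0) =
                RInt (fun u => RInt (fun r => I2 XEu u r) r0 (T + r0 - u)) 0 T).
  { rewrite <- (RInt_ext (fun r => RInt (fun u => Et u r) 0 (T + r0 - r))).
    2:{ intros x Hx. rewrite Rmin_left, Rmax_right in Hx by lra. apply EtL; lra. }
    rewrite Fub. apply RInt_ext. intros x Hx. rewrite Rmin_left, Rmax_right in Hx by lra. apply EtR; lra. }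
  assert (exS2 : ex_RInt (fun u => RInt (fun r => I2 XEu u r) r0 (T + r0 - u)) 0 T).
  { apply ex_RInt_ext with (fun u => RInt (fun r => Et u r) r0 (T + r0 - u)).
    { intros x Hx. rewrite Rmin_left, Rmax_right in Hx by lra. apply EtR; lra. }
    apply (ex_RInt_continuous (V:=R_CompleteNormedModule)). intros z _.
    apply continuity_pt_filterlim.
    apply (cont2_diag_pt (fun x y => RInt (Et x) r0 y) (T + r0) z). apply varint_cont; auto. }
  assert (rcI : forall X fu fr a b, cont_on (DB BB) X -> lip1 fu -> lip1 fr ->
     (forall x, a <= x <= b -> BB (fu x) (fr x)) -> rc a b (fun x => I2 X (fu x) (fr x))).
  { intros; apply rcI2 with BB; auto. }
  assert (exI : forall X fu fr a b, cont_on (DB BB) X -> lip1 fu -> lip1 fr -> a <= b ->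
     (forall x, a <= x <= b -> BB (fu x) (fr x)) -> ex_RInt (fun x => I2 X (fu x) (fr x)) a b).
  { intros; apply rc_ex; auto. }
  assert (Hpt : forall u, 0 < u < T -> RInt (fun r => I2 XEu u r) r0 (T + r0 - u) <=
     1/2 * ((I2 XR u (T+r0-u) - I2 XPQ u (T+r0-u)) - (I2 XR u r0 - I2 XPQ u r0))).
  { intros u Hu. rewrite <- HBt by lra.
    assert (ex1 : ex_RInt (fun r => I2 XEr u r - I2 XF u r) r0 (T + r0 - u)).
    { apply ex_RInt_sub.
      - exact (exI XEr (fun _ => u) (fun r => r) r0 (T + r0 - u) cXEr (lip1_const u) lip1_id ltac:(lra)
                 ltac:(intros; unfold BB, B0; lra)).
      - exact (exI XF (fun _ => u) (fun r => r) r0 (T + r0 - u) cXF (lip1_const u) lip1_id ltac:(lra)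
                 ltac:(intros; unfold BB, B0; lra)). }
    rewrite <- RInt_mulc by exact ex1.
    apply RInt_le; [lra | | apply ex_RInt_mulc; exact ex1 | ].
    - exact (exI XEu (fun _ => u) (fun r => r) r0 (T + r0 - u) cXEu (lip1_const u) lip1_id ltac:(lra)
                 ltac:(intros; unfold BB, B0; lra)).
    - intros r Hr. assert (HB : BB u r) by (unfold BB, B0; lra).
      rewrite (Id u r HB). pose proof (Kpos u r HB). lra. }
  assert (rch1 : rc 0 T (fun u => I2 XR u (T+r0-u) - I2 XPQ u (T+r0-u))).
  { apply rc_op2; [apply jc_minus | |].
    - exact (rcI XR (fun u => u) (fun u => T + r0 - u) 0 T cXR lip1_id (lip1_neg _) ltac:(intros; unfold BB, B0; lra)).
    - exact (rcI XPQ (fun u => u) (fun u => T + r0 - u) 0 T cXPQ lip1_id (lip1_neg _) ltac:(intros; unfold BB, B0; lra)). }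
  assert (rch2 : rc 0 T (fun u => I2 XR u r0 - I2 XPQ u r0)).
  { apply rc_op2; [apply jc_minus | |].
    - exact (rcI XR (fun u => u) (fun _ => r0) 0 T cXR lip1_id (lip1_const _) ltac:(intros; unfold BB, B0; lra)).
    - exact (rcI XPQ (fun u => u) (fun _ => r0) 0 T cXPQ lip1_id (lip1_const _) ltac:(intros; unfold BB, B0; lra)). }
  assert (Ineq : RInt (fun u => RInt (fun r => I2 XEu u r) r0 (T + r0 - u)) 0 T <=
     1/2 * (RInt (fun u => I2 XR u (T+r0-u) - I2 XPQ u (T+r0-u)) 0 T - RInt (fun u => I2 XR u r0 - I2 XPQ u r0) 0 T)).
  { rewrite <- RInt_sub by (apply rc_ex; auto; lra).
    rewrite <- RInt_mulc by (apply ex_RInt_sub; apply rc_ex; auto; lra).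
    apply RInt_le; [lra | exact exS2 | | ].
    - apply ex_RInt_mulc. apply ex_RInt_sub; apply rc_ex; auto; lra.
    - intros u Hu. apply Hpt; auto. }
  set (A1 := RInt (fun r => I2 XR (T + r0 - r) r) r0 (T + r0)).
  set (B1 := RInt (fun r => I2 XPQ (T + r0 - r) r) r0 (T + r0)).
  set (C := RInt (fun r => I2 XR 0 r) r0 (T + r0)).
  set (Dd := RInt (fun u => I2 XR u r0) 0 T).
  set (E := RInt (fun u => I2 XPQ u r0) 0 T).
  assert (exA1 : ex_RInt (fun r => I2 XR (T + r0 - r) r) r0 (T + r0)).
  { exact (exI XR (fun r => T + r0 - r) (fun r => r) r0 (T + r0) cXR (lip1_neg _) lip1_id ltac:(lra)
             ltac:(intros; unfold BB, B0; lra)). }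
  assert (exB1 : ex_RInt (fun r => I2 XPQ (T + r0 - r) r) r0 (T + r0)).
  { exact (exI XPQ (fun r => T + r0 - r) (fun r => r) r0 (T + r0) cXPQ (lip1_neg _) lip1_id ltac:(lra)
             ltac:(intros; unfold BB, B0; lra)). }
  assert (exC : ex_RInt (fun r => I2 XR 0 r) r0 (T + r0)).
  { exact (exI XR (fun _ => 0) (fun r => r) r0 (T + r0) cXR (lip1_const _) lip1_id ltac:(lra)
             ltac:(intros; unfold BB, B0; lra)). }
  assert (exD : ex_RInt (fun u => I2 XR u r0) 0 T).
  { exact (exI XR (fun u => u) (fun _ => r0) 0 T cXR lip1_id (lip1_const _) ltac:(lra)
             ltac:(intros; unfold BB, B0; lra)). }
  assert (exE : ex_RInt (fun u => I2 XPQ u r0) 0 T).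
  { exact (exI XPQ (fun u => u) (fun _ => r0) 0 T cXPQ lip1_id (lip1_const _) ltac:(lra)
             ltac:(intros; unfold BB, B0; lra)). }
  assert (HS1 : RInt (fun r => RInt (fun u => I2 XEu u r) 0 (T + r0 - r)) r0 (T + r0) = A1 - C).
  { rewrite (RInt_ext _ (fun r => I2 XR (T + r0 - r) r - I2 XR 0 r)).
    - apply RInt_sub; auto.
    - intros x Hx. rewrite Rmin_left, Rmax_right in Hx by lra. apply HA; lra. }
  assert (Hh1 : RInt (fun u => I2 XR u (T+r0-u) - I2 XPQ u (T+r0-u)) 0 T = A1 - B1).
  { rewrite (subst_lemma _ T r0) by (apply rc_ex; auto; lra).
    rewrite (RInt_ext _ (fun r => I2 XR (T + r0 - r) r - I2 XPQ (T + r0 - r) r)).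
    - apply RInt_sub; auto.
    - intros x _. replace (T + r0 - (T + r0 - x)) with x by ring. reflexivity. }
  assert (Hh2 : RInt (fun u => I2 XR u r0 - I2 XPQ u r0) 0 T = Dd - E) by (apply RInt_sub; auto).
  assert (HDd : 0 <= Dd).
  { apply RInt_ge_0; auto; [lra|]. intros x Hx. apply I2_ge0 with BB; auto.
    unfold BB, B0; lra. intros; unfold XR; apply pow2_ge_0. }
  assert (HE : 0 <= E).
  { apply RInt_ge_0; auto; [lra|]. intros x Hx. apply I2_ge0 with BB; auto.
    unfold BB, B0; lra. intros; unfold XPQ. pose proof (pow2_ge_0 (P x r0 s p)); pose proof (pow2_ge_0 (Q x r0 s p)); lra. }
  assert (HN : normT2 r0 T R_ P Q = A1 + B1).
  { unfold normT2, int3, A1, B1. rewrite <- RInt_add by auto. apply RInt_ext. intros x Hx.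
    rewrite Rmin_left, Rmax_right in Hx by lra.
    rewrite <- (I2_add BB XR XPQ) by (auto; unfold BB, B0; lra).
    unfold I2. apply RInt_ext; intros. apply RInt_ext; intros. unfold XR, XPQ. rring. }
  change (int_Sigma_u r0 T R_) with C. change (int_Sigma_r r0 T P Q) with E.
  rewrite HN. rewrite <- S12, HS1, Hh1, Hh2 in Ineq. lra.
Qed.
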